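(* Consider the generic SURQT model (6) described in the context, and let \[ \mathbf{Q}_2=\mathbf{Q}_1-\mathrm{diag}\!\left(\frac{\theta_i}{\theta_i+\delta_i}\right)\frac{\partial\mathbf{f}(\mathbf 0)}{\partial\mathbf{x}}-\mathrm{diag}\,\mathbf{g}(\mathbf 1),\qquad \mathbf{Q}_1=\frac{\partial\mathbf{f}(\mathbf 0)}{\partial\mathbf{x}}-\mathbf{D}_\theta, \] where $\mathrm{diag}\,\mathbf{g}(\mathbf 1)=\mathrm{diag}(g_1^R(\mathbf 1),\dots,g_N^R(\mathbf 1))$. If $s(\mathbf{Q}_2)>0$, then for any solution $(\mathbf{R}(t),\mathbf{T}(t))$ with initial value in $\Omega$ and $\mathbf{R}(0)>\mathbf 0$ there is $c>0$ such that $\liminf_{t\to\infty}R_i(t)\ge c$ for all $1\le i\le N$ (the rumor is persistent).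
   Context: $V=\{1,\dots,N\}$; $G_R=(V,E_R)$ and $G_T=(V,E_T)$ are strongly connected directed graphs. $\theta_i>0,\delta_i>0$; $\mathbf{D}_\theta=\mathrm{diag}(\theta_i)$. The functions $f_i^T,g_i^R:\mathbb{R}^N\to\mathbb{R}$ satisfy: (C1) $f_i^T$ depends on $x_j$ iff $(i,j)\in E_R$, $g_i^R$ depends on $x_j$ iff $(i,j)\in E_T$; (C2) $f_i^T(\mathbf 0)=g_i^R(\mathbf 0)=0$; (C3) twice continuously differentiable; (C4) strictly increasing in each argument; (C5) concave. $\mathbf{f}=(f_1^T,\dots,f_N^T)^T$ with Jacobian $\frac{\partial\mathbf{f}(\mathbf 0)}{\partial\mathbf x}$ at the origin; $\mathbf 1=(1,\dots,1)$. $s(\mathbf{A})$ is the maximum real part of an eigenvalue of $\mathbf{A}$. The generic SURQT model (6) is, for $i=1,\dots,N$, \[ \frac{dR_i}{dt}=T_i f_i^T(\mathbf{R})-R_i g_i^R(\mathbf{T})-\theta_iR_i,\qquad \frac{dT_i}{dt}=R_i g_i^R(\mathbf{T})-T_i f_i^T(\mathbf{R})+\delta_i(1-R_i-T_i), \] on $\Omega=\{(x_1,\dots,x_{2N})\in\mathbb{R}_+^{2N}: x_i+x_{N+i}\le1\}$. $\mathbf{R}(0)>\mathbf 0$ means every component is positive. *)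

(* Defs.v *)
From Stdlib Require Import Reals Lra Relations.
Open Scope R_scope.

(* Vectors of R^N are represented as functions nat -> R; only the
   coordinates 0..N-1 are meaningful (vertex i of the paper = index i-1). *)
Definition vec := nat -> R.

Fixpoint vsum (n : nat) (f : nat -> R) : R :=
  match n with
  | O => 0
  | S m => vsum m f + f m
  end.

Definition upd (x : vec) (j : nat) (t : R) : vec :=
  fun k => if Nat.eqb k j then t else x k.

Definition zerov : vec := fun _ => 0.
Definition onev : vec := fun _ => 1.

Definition strongly_connected (N : nat) (E : nat -> nat -> Prop) : Prop :=
  forall i j, (i < N)%nat -> (j < N)%nat ->
    clos_refl_trans nat (fun a b => (a < N)%nat /\ (b < N)%nat /\ E a b) i j.

Definition depends_on (F : vec -> R) (j : nat) : Prop :=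
  exists x t, F (upd x j t) <> F x.

Definition partial_at (F : vec -> R) (j : nat) (x : vec) (l : R) : Prop :=
  derivable_pt_lim (fun t => F (upd x j t)) (x j) l.

Definition contN (N : nat) (F : vec -> R) : Prop :=
  forall x eps, eps > 0 -> exists d, d > 0 /\
    forall y, (forall k, (k < N)%nat -> Rabs (y k - x k) < d) ->
      Rabs (F y - F x) < eps.

Definition C2N (N : nat) (F : vec -> R) : Prop :=
  contN N F /\
  exists (D1 : nat -> vec -> R) (D2 : nat -> nat -> vec -> R),
    (forall j x, (j < N)%nat -> partial_at F j x (D1 j x)) /\
    (forall j, (j < N)%nat -> contN N (D1 j)) /\
    (forall j k x, (j < N)%nat -> (k < N)%nat -> partial_at (D1 j) k x (D2 j k x)) /\
    (forall j k, (j < N)%nat -> (k < N)%nat -> contN N (D2 j k)).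

Definition strictly_increasing_args (N : nat) (E : nat -> nat -> Prop) (i : nat)
  (F : vec -> R) : Prop :=
  forall j x t s, (j < N)%nat -> E i j -> t < s -> F (upd x j t) < F (upd x j s).

Definition concave (F : vec -> R) : Prop :=
  forall x y l, 0 <= l <= 1 ->
    l * F x + (1 - l) * F y <= F (fun k => l * x k + (1 - l) * y k).

Definition admissible (N : nat) (E : nat -> nat -> Prop) (F : nat -> vec -> R) : Prop :=
  forall i, (i < N)%nat ->
    (forall j, depends_on (F i) j <-> ((j < N)%nat /\ E i j)) /\
    F i zerov = 0 /\
    C2N N (F i) /\
    strictly_increasing_args N E i (F i) /\
    concave (F i).

(* s(A) > 0 : A (N x N real matrix) has an eigenvalue a + i b with a > 0,
   i.e. a nonzero complex eigenvector x + i y with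
   A x = a x - b y,  A y = b x + a y. *)
Definition spectral_abscissa_pos (N : nat) (A : nat -> nat -> R) : Prop :=
  exists a b (x y : vec), a > 0 /\
    (exists k, (k < N)%nat /\ (x k <> 0 \/ y k <> 0)) /\
    (forall i, (i < N)%nat ->
       vsum N (fun j => A i j * x j) = a * x i - b * y i /\
       vsum N (fun j => A i j * y j) = b * x i + a * y i).

Definition Q2 (N : nat) (J : nat -> nat -> R) (theta delta : nat -> R)
  (g : nat -> vec -> R) : nat -> nat -> R :=
  fun i j => (J i j - (if Nat.eqb i j then theta i else 0))
             - theta i / (theta i + delta i) * J i j
             - (if Nat.eqb i j then g i onev else 0).

Definition is_solution (N : nat) (f g : nat -> vec -> R) (theta delta : nat -> R)
  (Rr Tt : R -> vec) : Prop :=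
  (forall i, (i < N)%nat ->
     forall eps, eps > 0 -> exists d, d > 0 /\ forall t, 0 <= t < d ->
       Rabs (Rr t i - Rr 0 i) < eps /\ Rabs (Tt t i - Tt 0 i) < eps) /\
  (forall i t, (i < N)%nat -> t > 0 ->
     derivable_pt_lim (fun s => Rr s i) t
       (Tt t i * f i (Rr t) - Rr t i * g i (Tt t) - theta i * Rr t i) /\
     derivable_pt_lim (fun s => Tt s i) t
       (Rr t i * g i (Tt t) - Tt t i * f i (Rr t)
        + delta i * (1 - Rr t i - Tt t i))).

(* Main.v *)
Require Import Defs.
From Stdlib Require Import Reals.
From Stdlib Require Import Lra Lia Classical FunctionalExtensionality Relations.
Open Scope R_scope.


Lemma vsum_ext n f g : (forall j, (j < n)%nat -> f j = g j) -> vsum n f = vsum n g.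
Proof. induction n; simpl; intros H; auto. rewrite IHn by (intros; apply H; lia). rewrite H by lia; auto. Qed.

Lemma vsum_plus n f g : vsum n (fun j => f j + g j) = vsum n f + vsum n g.
Proof. induction n; simpl; [lra|rewrite IHn; lra]. Qed.

Lemma vsum_scal n c f : vsum n (fun j => c * f j) = c * vsum n f.
Proof. induction n; simpl; [lra|rewrite IHn; lra]. Qed.

Lemma vsum_opp n f : vsum n (fun j => - f j) = - vsum n f.
Proof. induction n; simpl; [lra|rewrite IHn; lra]. Qed.

Lemma vsum_delta n i c : (i < n)%nat -> vsum n (fun j => if Nat.eqb i j then c else 0) = c.
Proof.
  induction n; intros H; [lia|]. simpl.
  destruct (Nat.eq_dec i n) as [->|Hn].
  - rewrite Nat.eqb_refl. rewrite (vsum_ext _ _ (fun _ => 0)).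
    + clear. assert (forall m, vsum m (fun _ => 0) = 0) by (induction m; simpl; lra). rewrite H; lra.
    + intros j Hj. destruct (Nat.eqb_spec n j); [lia|auto].
  - rewrite IHn by lia. destruct (Nat.eqb_spec i n); [lia|lra].
Qed.

Lemma vsum_nonneg n f : (forall j, (j<n)%nat -> 0 <= f j) -> 0 <= vsum n f.
Proof. induction n; simpl; intros H; [lra|]. specialize (IHn (fun j Hj => H j ltac:(lia))). specialize (H n ltac:(lia)). lra. Qed.

Lemma vsum_ge_term n f k : (forall j, (j<n)%nat -> 0 <= f j) -> (k < n)%nat -> f k <= vsum n f.
Proof.
  induction n; simpl; intros H Hk; [lia|].
  destruct (Nat.eq_dec k n) as [->|].
  - pose proof (vsum_nonneg n f (fun j Hj => H j ltac:(lia))); lra.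
  - specialize (IHn (fun j Hj => H j ltac:(lia)) ltac:(lia)). specialize (H n ltac:(lia)); lra.
Qed.

Lemma vsum_le n f g : (forall j, (j<n)%nat -> f j <= g j) -> vsum n f <= vsum n g.
Proof. induction n; simpl; intros H; [lra|]. specialize (IHn (fun j Hj => H j ltac:(lia))). specialize (H n ltac:(lia)). lra. Qed.

Lemma fin_delta (n : nat) (P : nat -> Prop) (Q : nat -> R -> Prop) :
  (forall k d d', 0 < d' <= d -> Q k d -> Q k d') ->
  (forall k, (k < n)%nat -> P k -> exists d, d > 0 /\ Q k d) ->
  exists d, d > 0 /\ forall k, (k < n)%nat -> P k -> Q k d.
Proof.
  intros Hm. induction n; intros H.
  - exists 1; split; [lra|intros; lia].
  - destruct IHn as [d [Hd HQ]]; [intros; apply H; auto; lia|].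
    destruct (classic (P n)) as [Pn|Pn].
    + destruct (H n ltac:(lia) Pn) as [d2 [Hd2 HQ2]].
      exists (Rmin d d2); split; [apply Rmin_glb_lt; auto|].
      intros k Hk Pk. destruct (Nat.eq_dec k n) as [->|].
      * apply Hm with d2; auto. split; [apply Rmin_glb_lt; auto|apply Rmin_r].
      * apply Hm with d; auto. split; [apply Rmin_glb_lt; auto|apply Rmin_l]. apply HQ; auto; lia.
    + exists d; split; auto. intros k Hk Pk. destruct (Nat.eq_dec k n) as [->|]; [tauto|]. apply HQ; auto; lia.
Qed.

Lemma fin_event (n : nat) (P : nat -> Prop) (Q : nat -> R -> Prop) :
  (forall k, (k < n)%nat -> P k -> exists T, forall t, t >= T -> Q k t) ->
  exists T, forall k, (k < n)%nat -> P k -> forall t, t >= T -> Q k t.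
Proof.
  induction n; intros H.
  - exists 0; intros; lia.
  - destruct IHn as [T HT]; [intros; apply H; auto; lia|].
    destruct (classic (P n)) as [Pn|Pn].
    + destruct (H n ltac:(lia) Pn) as [T2 HT2].
      exists (Rmax T T2). intros k Hk Pk t Ht.
      destruct (Nat.eq_dec k n) as [->|].
      * apply HT2. pose proof (Rmax_r T T2); lra.
      * apply HT; auto; [lia|]. pose proof (Rmax_l T T2); lra.
    + exists T. intros k Hk Pk. destruct (Nat.eq_dec k n) as [->|]; [tauto|]. apply HT; auto; lia.
Qed.

Lemma fin_lower (n : nat) (P : nat -> Prop) (v : nat -> R) :
  (forall k, (k < n)%nat -> P k -> v k > 0) ->
  exists m, m > 0 /\ forall k, (k < n)%nat -> P k -> m <= v k.
Proof.
  intros H. destruct (fin_delta n P (fun k d => d <= v k)) as [d [Hd Hq]].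
  - intros; lra.
  - intros k Hk Pk. exists (v k). split; [apply H; auto|lra].
  - exists d; auto.
Qed.

Lemma dcont f x l : derivable_pt_lim f x l ->
  forall e, e > 0 -> exists d, d > 0 /\ forall u, Rabs (u - x) < d -> Rabs (f u - f x) < e.
Proof.
  intros Hd e He. destruct (Hd 1 ltac:(lra)) as [del Hdel].
  assert (Hl : Rabs l + 1 > 0) by (pose proof (Rabs_pos l); lra).
  exists (Rmin del (e / (Rabs l + 1))). split.
  { apply Rmin_glb_lt; [apply cond_pos|]. apply Rdiv_lt_0_compat; lra. }
  intros u Hu. destruct (Req_dec u x) as [->|Hne].
  { rewrite Rminus_diag, Rabs_R0; lra. }
  assert (Hh : u - x <> 0) by lra.
  specialize (Hdel (u - x) Hh).
  assert (Hu1 : Rabs (u - x) < del) by (eapply Rlt_le_trans; [apply Hu|apply Rmin_l]).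
  assert (Hu2 : Rabs (u - x) < e / (Rabs l + 1)) by (eapply Rlt_le_trans; [apply Hu|apply Rmin_r]).
  specialize (Hdel Hu1). replace (x + (u - x)) with u in Hdel by ring.
  set (q := (f u - f x) / (u - x)) in *.
  assert (Hq : f u - f x = q * (u - x)) by (unfold q; field; auto).
  rewrite Hq, Rabs_mult.
  assert (Rabs q <= Rabs l + 1).
  { replace q with ((q - l) + l) by ring. pose proof (Rabs_triang (q - l) l). lra. }
  apply Rle_lt_trans with ((Rabs l + 1) * Rabs (u - x)).
  - apply Rmult_le_compat_r; [apply Rabs_pos|lra].
  - apply Rmult_lt_reg_r with (/ (Rabs l + 1)). { apply Rinv_0_lt_compat; lra. }
    replace ((Rabs l + 1) * Rabs (u - x) * / (Rabs l + 1)) with (Rabs (u - x)) by (field; lra).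
    exact Hu2.
Qed.

Lemma touch h t0 t l : derivable_pt_lim h t l -> t0 < t ->
  (forall s, t0 <= s < t -> h s > 0) -> h t = 0 -> l <= 0.
Proof.
  intros Hd Ht Hpos H0. destruct (Rle_dec l 0) as [|Hl]; auto. exfalso.
  apply Rnot_le_lt in Hl.
  destruct (Hd l Hl) as [del Hdel].
  set (hh := - Rmin (del / 2) ((t - t0) / 2)).
  assert (Hm1 : Rmin (del/2) ((t-t0)/2) > 0) by (apply Rmin_glb_lt; [pose proof (cond_pos del)|]; lra).
  assert (Hm2 : Rmin (del/2) ((t-t0)/2) <= del/2) by apply Rmin_l.
  assert (Hm3 : Rmin (del/2) ((t-t0)/2) <= (t-t0)/2) by apply Rmin_r.
  pose proof (cond_pos del).
  assert (hh <> 0) by (unfold hh; lra).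
  assert (Rabs hh < del) by (unfold hh; rewrite Rabs_Ropp, Rabs_pos_eq; lra).
  specialize (Hdel hh H1 H2). rewrite H0 in Hdel.
  assert (Hp : h (t + hh) > 0) by (apply Hpos; unfold hh; lra).
  assert (Hneg : (h (t + hh) - 0) / hh < 0).
  { unfold Rdiv. rewrite Rminus_0_r. apply Rmult_pos_neg; auto. apply Rinv_lt_0_compat. unfold hh; lra. }
  assert (Hab := Rabs_def2 _ _ Hdel). lra.
Qed.

Definition ctn (h : R -> R) (t : R) : Prop := forall e : R, e > 0 -> exists d : R, d > 0 /\ forall u, Rabs (u - t) < d -> Rabs (h u - h t) < e.

Lemma cross (n : nat) (P : nat -> Prop) (h : nat -> R -> R) (t0 tau : R) :
  (forall k, (k < n)%nat -> P k -> h k t0 > 0) ->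
  (forall k, (k < n)%nat -> P k -> forall e, e > 0 -> exists d, d > 0 /\      forall t, t0 <= t < t0 + d -> Rabs (h k t - h k t0) < e) ->
  (forall k, (k < n)%nat -> P k -> forall t, t0 < t <= tau -> ctn (h k) t) ->
  (forall t, t0 < t <= tau ->
     (forall k, (k < n)%nat -> P k -> forall s, t0 <= s < t -> h k s > 0) ->
     (forall k, (k < n)%nat -> P k -> h k t >= 0) ->
     forall k, (k < n)%nat -> P k -> h k t = 0 -> False) ->
  forall t, t0 <= t <= tau -> forall k, (k < n)%nat -> P k -> h k t > 0.
Proof.
  intros H0 Hr Hc Hd t Ht.
  apply NNPP; intro Hbad.
  assert (Hbad' : exists k, (k < n)%nat /\ P k /\ h k t <= 0).
  { apply NNPP; intro C. apply Hbad; intros k Hk Pk. apply Rnot_le_lt; intro; apply C; eauto. }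
  clear Hbad. destruct Hbad' as [kb [Hkb [Pkb Hhb]]].
  assert (Htt : t0 < t).
  { destruct (Rle_lt_or_eq_dec t0 t) as [|E]; [lra|auto|]. subst. specialize (H0 kb Hkb Pkb); lra. }
  set (G := fun s => t0 <= s <= t /\ forall u, t0 <= u <= s -> forall k, (k < n)%nat -> P k -> h k u > 0).
  assert (HG0 : G t0).
  { split; [lra|]. intros u Hu k Hk Pk. replace u with t0 by lra. auto. }
  destruct (completeness G) as [s [Hub Hlub]].
  { exists t; intros x [Hx _]; lra. }
  { exists t0; auto. }
  assert (Hs1 : t0 <= s) by (apply Hub; auto).
  assert (Hs2 : s <= t) by (apply Hlub; intros x [Hx _]; lra).
  assert (HA : forall u, t0 <= u < s -> forall k, (k < n)%nat -> P k -> h k u > 0).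
  { intros u Hu k Hk Pk.
    assert (exists s', G s' /\ u < s').
    { apply NNPP; intro C. assert (s <= u); [|lra]. apply Hlub. intros x Gx.
      apply Rnot_lt_le; intro; apply C; eauto. }
    destruct H as [s' [[Hs' Hall] Hus]]. apply Hall; auto; lra. }
  assert (HB : t0 < s).
  { destruct (fin_delta n P (fun k d => forall u, t0 <= u < t0 + d -> h k u > 0)) as [d [Hdp Hdq]].
    - intros k d d' Hd' Hq u Hu; apply Hq; lra.
    - intros k Hk Pk. destruct (Hr k Hk Pk (h k t0) (H0 k Hk Pk)) as [d [Hdp Hdq]].
      exists d; split; auto. intros u Hu. specialize (Hdq u Hu). apply Rabs_def2 in Hdq. lra.
    - assert (G (Rmin (t0 + d/2) t)).
      { split. { split; [apply Rmin_glb; lra|apply Rmin_r]. }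
        intros u Hu k Hk Pk. apply Hdq; auto. pose proof (Rmin_l (t0 + d/2) t). lra. }
      apply Hub in H. assert (t0 < Rmin (t0 + d/2) t) by (apply Rmin_glb_lt; lra). lra. }
  assert (HC : forall k, (k < n)%nat -> P k -> h k s >= 0).
  { intros k Hk Pk. apply Rnot_lt_ge; intro Hneg.
    destruct (Hc k Hk Pk s ltac:(lra) (- h k s) ltac:(lra)) as [d [Hdp Hdq]].
    set (u := Rmax t0 (s - d/2)).
    assert (t0 <= u) by apply Rmax_l. assert (s - d/2 <= u) by apply Rmax_r.
    assert (u < s) by (apply Rmax_lub_lt; lra).
    specialize (HA u ltac:(lra) k Hk Pk).
    assert (Rabs (u - s) < d) by (rewrite Rabs_left; lra).
    specialize (Hdq u H3). apply Rabs_def2 in Hdq. lra. }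
  destruct (classic (forall k, (k < n)%nat -> P k -> h k s > 0)) as [Hall|Hnall].
  - exfalso.
    destruct (fin_delta n P (fun k d => forall u, Rabs (u - s) < d -> h k u > 0)) as [d [Hdp Hdq]].
    + intros k d d' Hd' Hq u Hu; apply Hq; lra.
    + intros k Hk Pk. destruct (Hc k Hk Pk s ltac:(lra) (h k s) (Hall k Hk Pk)) as [d [Hdp Hdq]].
      exists d; split; auto. intros u Hu. specialize (Hdq u Hu). apply Rabs_def2 in Hdq. lra.
    + destruct (Rle_lt_or_eq_dec s t Hs2) as [Hlt|Heq].
      * assert (G (Rmin (s + d/2) t)).
        { split. { split; [apply Rmin_glb; lra|apply Rmin_r]. }
          intros u Hu k Hk Pk. pose proof (Rmin_l (s + d/2) t).
          destruct (Rlt_le_dec u s). { apply HA; auto; lra. }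
          apply Hdq; auto. rewrite Rabs_pos_eq; lra. }
        apply Hub in H. assert (s < Rmin (s + d/2) t) by (apply Rmin_glb_lt; lra). lra.
      * subst s. specialize (Hall kb Hkb Pkb). lra.
  - assert (exists k, (k < n)%nat /\ P k /\ h k s <= 0).
    { apply NNPP; intro C. apply Hnall; intros k Hk Pk. apply Rnot_le_lt; intro; apply C; eauto. }
    destruct H as [k [Hk [Pk Hle]]].
    apply (Hd s ltac:(lra) (fun k Hk Pk u Hu => HA u Hu k Hk Pk) HC k Hk Pk). specialize (HC k Hk Pk). lra.
Qed.


Lemma upd_same x j : upd x j (x j) = x.
Proof. apply functional_extensionality; intro k; unfold upd. destruct (Nat.eqb_spec k j); subst; auto. Qed.
Lemma upd_upd x j a b : upd (upd x j a) j b = upd x j b.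
Proof. apply functional_extensionality; intro k; unfold upd. destruct (Nat.eqb_spec k j); auto. Qed.
Lemma upd_eq x j t : upd x j t j = t.
Proof. unfold upd; rewrite Nat.eqb_refl; auto. Qed.
Lemma upd_neq x j t k : k <> j -> upd x j t k = x k.
Proof. intros; unfold upd; destruct (Nat.eqb_spec k j); [lia|auto]. Qed.

Lemma contN_eq N F x y : contN N F -> (forall k, (k < N)%nat -> x k = y k) -> F x = F y.
Proof.
  intros Hc Hxy. apply NNPP; intro Hne.
  assert (He : Rabs (F x - F y) > 0) by (apply Rabs_pos_lt; lra).
  destruct (Hc y _ He) as [d [Hd Hq]].
  specialize (Hq x). assert (Rabs (F x - F y) < Rabs (F x - F y)); [|lra].
  apply Hq. intros k Hk. rewrite Hxy by auto. rewrite Rminus_diag, Rabs_R0; lra.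
Qed.

Lemma nodep F j x t : ~ depends_on F j -> F (upd x j t) = F x.
Proof. intros H. apply NNPP; intro C. apply H. exists x, t; auto. Qed.

Section Mono.
Variable (N : nat) (E : nat -> nat -> Prop) (i : nat) (F : vec -> R).
Hypothesis Hdep : forall j, depends_on F j <-> ((j < N)%nat /\ E i j).
Hypothesis Hinc : strictly_increasing_args N E i F.
Hypothesis Hcont : contN N F.

Lemma mono1 j x a b : a <= b -> F (upd x j a) <= F (upd x j b).
Proof.
  intros Hab. destruct (classic ((j < N)%nat /\ E i j)) as [[Hj Ej]|Hn].
  - destruct (Rle_lt_or_eq_dec a b Hab) as [Hl| ->]; [|lra].
    left; apply Hinc; auto.
  - assert (~ depends_on F j) by (rewrite Hdep; auto).
    rewrite !nodep by auto; lra.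
Qed.

Lemma mono_aux n : forall x y, (forall k, (k < n)%nat -> x k <= y k) ->
  (forall k, (k >= n)%nat -> x k = y k) -> F x <= F y.
Proof.
  induction n; intros x y Hle Heq.
  - assert (x = y) by (apply functional_extensionality; intro k; apply Heq; lia). subst; lra.
  - apply Rle_trans with (F (upd x n (y n))).
    + rewrite <- (upd_same x n) at 1. apply mono1. apply Hle; lia.
    + apply IHn.
      * intros k Hk. rewrite upd_neq by lia. apply Hle; lia.
      * intros k Hk. destruct (Nat.eq_dec k n) as [->|]. { rewrite upd_eq; auto. }
        rewrite upd_neq by auto. apply Heq; lia.
Qed.

Lemma mono x y : (forall k, (k < N)%nat -> x k <= y k) -> F x <= F y.
Proof.
  intros Hle. set (z := fun k => if Nat.ltb k N then x k else y k).
  rewrite (contN_eq N F x z Hcont).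
  - apply (mono_aux N).
    + intros k Hk. unfold z. destruct (Nat.ltb_spec k N); [apply Hle|]; lia.
    + intros k Hk. unfold z. destruct (Nat.ltb_spec k N); [lia|auto].
  - intros k Hk. unfold z. destruct (Nat.ltb_spec k N); [auto|lia].
Qed.

Lemma deriv_nonneg (h : R -> R) x l : (forall a b, a <= b -> h a <= h b) -> derivable_pt_lim h x l -> 0 <= l.
Proof.
  intros Hm Hd. apply Rnot_lt_le; intro Hl.
  destruct (Hd (- l) ltac:(lra)) as [del Hdel].
  pose proof (cond_pos del).
  specialize (Hdel (del/2) ltac:(lra) ltac:(rewrite Rabs_pos_eq; lra)).
  assert (0 <= (h (x + del/2) - h x) / (del/2)).
  { unfold Rdiv. apply Rmult_le_pos; [|left; apply Rinv_0_lt_compat; lra]. specialize (Hm x (x + del/2) ltac:(lra)); lra. }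
  apply Rabs_def2 in Hdel. lra.
Qed.

Lemma partial_nonneg j x l : partial_at F j x l -> 0 <= l.
Proof. intros H. eapply deriv_nonneg; [|exact H]. intros a b Hab. apply mono1; auto. Qed.

End Mono.

Lemma concave_low F p : concave F -> F zerov = 0 -> 0 <= p <= 1 ->
  p * F (fun _ => -1) <= F (fun _ => - p).
Proof.
  intros Hc H0 Hp. specialize (Hc (fun _ => -1) zerov p Hp).
  rewrite H0 in Hc.
  replace (fun k : nat => p * -1 + (1 - p) * zerov k) with (fun _ : nat => - p) in Hc.
  - lra.
  - apply functional_extensionality; intro; unfold zerov; ring.
Qed.

Lemma taylor N F (D1 : nat -> vec -> R) (Jv : nat -> R) (w : vec) :
  contN N F -> (forall j x, (j < N)%nat -> partial_at F j x (D1 j x)) ->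
  (forall j, (j < N)%nat -> contN N (D1 j)) ->
  (forall j, (j < N)%nat -> partial_at F j zerov (Jv j)) ->
  (forall j, (j < N)%nat -> 0 <= w j) -> F zerov = 0 ->
  forall eta, eta > 0 -> exists c0, c0 > 0 /\ forall c, 0 < c <= c0 ->
    F (fun k => c * w k) >= c * vsum N (fun j => w j * (Jv j - eta)).
Proof.
  intros Hc HD1 HD1c HJ Hw H0 eta Heta.
  assert (HDJ : forall j, (j < N)%nat -> D1 j zerov = Jv j).
  { intros j Hj. eapply uniqueness_limite; [apply (HD1 j zerov Hj)|apply HJ; auto]. }
  destruct (fin_delta N (fun _ => True) (fun j d => forall y, (forall k, (k < N)%nat -> Rabs (y k - zerov k) < d) -> Rabs (D1 j y - D1 j zerov) < eta)) as [d [Hd Hdq]].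
  { intros k d d' Hd' Hq y Hy. apply Hq. intros m Hm. specialize (Hy m Hm); lra. }
  { intros j Hj _. destruct (HD1c j Hj zerov eta Heta) as [d [Hd Hq]]. exists d; split; auto. }
  set (W := vsum N w). assert (HW : 0 <= W) by (apply vsum_nonneg; auto).
  exists (d / (W + 1)). split; [apply Rdiv_lt_0_compat; lra|].
  intros c Hc0.
  assert (Hcw : forall k, (k < N)%nat -> 0 <= c * w k < d).
  { intros k Hk. split. { apply Rmult_le_pos; [lra|auto]. }
    assert (w k <= W) by (apply vsum_ge_term; auto).
    apply Rle_lt_trans with (c * W). { apply Rmult_le_compat_l; lra. }
    apply Rle_lt_trans with (d / (W + 1) * W). { apply Rmult_le_compat_r; lra. }
    apply Rmult_lt_reg_r with (W + 1); [lra|].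
    replace (d / (W + 1) * W * (W + 1)) with (d * W) by (field; lra). nra. }
  set (p := fun n : nat => fun k : nat => if Nat.ltb k n then c * w k else 0).
  assert (Hind : forall n, (n <= N)%nat -> F (p n) >= c * vsum n (fun j => w j * (Jv j - eta))).
  { induction n; intros Hn.
    - simpl. assert (p 0%nat = zerov) by (apply functional_extensionality; intro k; reflexivity).
      rewrite H, H0; lra.
    - specialize (IHn ltac:(lia)). simpl vsum.
      assert (HpS : p (S n) = upd (p n) n (c * w n)).
      { apply functional_extensionality; intro k. unfold p, upd.
        destruct (Nat.eqb_spec k n) as [->|Hkn].
        - rewrite (proj2 (Nat.ltb_lt n (S n))) by lia; auto.
        - destruct (Nat.ltb_spec k (S n)); destruct (Nat.ltb_spec k n); auto; lia. }
      assert (Hp0 : p n = upd (p n) n 0).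
      { apply functional_extensionality; intro k. unfold p, upd.
        destruct (Nat.eqb_spec k n) as [->|Hkn]; auto. rewrite Nat.ltb_irrefl; auto. }
      assert (Hdiff : F (p (S n)) - F (p n) >= c * (w n * (Jv n - eta))).
      { rewrite HpS. rewrite Hp0 at 2.
        destruct (Rle_lt_or_eq_dec 0 (w n) (Hw n ltac:(lia))) as [Hwn|Hwn].
        - assert (Hcwn : 0 < c * w n) by (apply Rmult_lt_0_compat; lra).
          destruct (MVT_cor2 (fun t => F (upd (p n) n t)) (fun t => D1 n (upd (p n) n t)) 0 (c * w n) Hcwn) as [xi [Hxi Hxr]].
          + intros t Ht. pose proof (HD1 n (upd (p n) n t) ltac:(lia)) as Hpa.
            unfold partial_at in Hpa. rewrite upd_eq in Hpa.
            replace (fun t0 => F (upd (p n) n t0)) with (fun t0 => F (upd (upd (p n) n t) n t0)); auto.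
            apply functional_extensionality; intro; rewrite upd_upd; auto.
          + rewrite Hxi.
            assert (Hq : D1 n (upd (p n) n xi) > Jv n - eta).
            { rewrite <- HDJ by lia. assert (Hab : Rabs (D1 n (upd (p n) n xi) - D1 n zerov) < eta).
              { apply Hdq; [lia|auto|]. intros k Hk. unfold zerov. rewrite Rminus_0_r.
                destruct (Nat.eq_dec k n) as [->|Hkn].
                - rewrite upd_eq. rewrite Rabs_pos_eq by lra. specialize (Hcw n Hk); lra.
                - rewrite upd_neq by auto. unfold p. destruct (Nat.ltb k n).
                  + specialize (Hcw k Hk). rewrite Rabs_pos_eq; lra.
                  + rewrite Rabs_R0; lra. }
              apply Rabs_def2 in Hab. lra. }
            rewrite Rminus_0_r. replace (c * (w n * (Jv n - eta))) with ((Jv n - eta) * (c * w n)) by ring.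
            apply Rle_ge, Rmult_le_compat_r; lra.
        - rewrite <- Hwn. rewrite Rmult_0_r. rewrite Rmult_0_l, Rmult_0_r. lra. }
      lra. }
  specialize (Hind N (Nat.le_refl N)).
  rewrite (contN_eq N F (fun k => c * w k) (p N) Hc); auto.
  intros k Hk. unfold p. destruct (Nat.ltb_spec k N); auto; lia.
Qed.


Lemma tri2 P Q u v : sqrt ((P+u)*(P+u) + (Q+v)*(Q+v)) <= sqrt (P*P+Q*Q) + sqrt (u*u+v*v).
Proof.
  assert (H1 : 0 <= P*P+Q*Q) by nra. assert (H2 : 0 <= u*u+v*v) by nra.
  set (s1 := sqrt (P*P+Q*Q)). set (s2 := sqrt (u*u+v*v)).
  assert (E1 : s1 * s1 = P*P+Q*Q) by (apply sqrt_sqrt; auto).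
  assert (E2 : s2 * s2 = u*u+v*v) by (apply sqrt_sqrt; auto).
  assert (G1 : 0 <= s1) by apply sqrt_pos. assert (G2 : 0 <= s2) by apply sqrt_pos.
  assert (Hcs : P*u + Q*v <= s1 * s2).
  { assert ((s1*s2)*(s1*s2) = (P*P+Q*Q)*(u*u+v*v)) by (rewrite <- E1, <- E2; ring).
    assert ((P*u+Q*v)*(P*u+Q*v) <= (s1*s2)*(s1*s2)).
    { rewrite H. pose proof (Rle_0_sqr (P*v-Q*u)). unfold Rsqr in *. nra. }
    assert (0 <= s1*s2) by (apply Rmult_le_pos; auto).
    set (X := s1*s2) in *. set (Y := P*u+Q*v) in *.
    destruct (Rle_dec Y 0); [lra|]. destruct (Rle_dec Y X) as [|Hn]; auto. exfalso. nra. }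
  rewrite <- (sqrt_square (s1 + s2)) by lra.
  apply sqrt_le_1_alt. nra.
Qed.

Lemma mink n (Bc x y : nat -> R) : (forall j, (j < n)%nat -> 0 <= Bc j) ->
  sqrt (vsum n (fun j => Bc j * x j) * vsum n (fun j => Bc j * x j) + vsum n (fun j => Bc j * y j) * vsum n (fun j => Bc j * y j))
  <= vsum n (fun j => Bc j * sqrt (x j * x j + y j * y j)).
Proof.
  induction n; intros HB; simpl.
  - rewrite Rmult_0_l, Rplus_0_l, sqrt_0; lra.
  - specialize (IHn (fun j Hj => HB j ltac:(lia))). specialize (HB n ltac:(lia)).
    eapply Rle_trans; [apply tri2|].
    assert (sqrt (Bc n * x n * (Bc n * x n) + Bc n * y n * (Bc n * y n)) = Bc n * sqrt (x n * x n + y n * y n)).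
    { replace (Bc n * x n * (Bc n * x n) + Bc n * y n * (Bc n * y n)) with ((Bc n * Bc n) * (x n * x n + y n * y n)) by ring.
      rewrite sqrt_mult by nra. rewrite sqrt_square by auto. auto. }
    lra.
Qed.

Lemma pf_sub N (A : nat -> nat -> R) :
  (forall i j, (i < N)%nat -> (j < N)%nat -> i <> j -> 0 <= A i j) ->
  spectral_abscissa_pos N A ->
  exists a (w : vec), a > 0 /\ (forall j, 0 <= w j) /\ (exists k, (k < N)%nat /\ w k > 0) /\
    forall i, (i < N)%nat -> vsum N (fun j => A i j * w j) >= a * w i.
Proof.
  intros Hoff [a [b [x [y [Ha [[k [Hk Hnz]] Heig]]]]]].
  set (w := fun j => sqrt (x j * x j + y j * y j)).
  exists a, w. split; [auto|]. split; [intros; apply sqrt_pos|]. split.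
  { exists k; split; auto. unfold w. apply sqrt_lt_R0. destruct Hnz as [H|H]; nra. }
  intros i Hi.
  set (be := vsum N (fun m => Rabs (A m m))).
  assert (Hbe : forall m, (m < N)%nat -> Rabs (A m m) <= be) by (intros; apply (vsum_ge_term N (fun m => Rabs (A m m))); auto; intros; apply Rabs_pos).
  assert (Hbe0 : 0 <= be) by (apply vsum_nonneg; intros; apply Rabs_pos).
  set (Bc := fun j => A i j + (if Nat.eqb i j then be else 0)).
  assert (HB : forall j, (j < N)%nat -> 0 <= Bc j).
  { intros j Hj. unfold Bc. destruct (Nat.eqb_spec i j) as [<-|Hne].
    - specialize (Hbe i Hi). 
      assert (- Rabs (A i i) <= A i i) by (pose proof (Rle_abs (- A i i)); rewrite Rabs_Ropp in H; lra). lra.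
    - rewrite Rplus_0_r. apply Hoff; auto. }
  assert (Hsum : forall z : vec, vsum N (fun j => Bc j * z j) = vsum N (fun j => A i j * z j) + be * z i).
  { intros z. unfold Bc. rewrite <- (vsum_delta N i (be * z i) Hi). rewrite <- vsum_plus.
    apply vsum_ext. intros j Hj. destruct (Nat.eqb_spec i j) as [<-|]; ring. }
  destruct (Heig i Hi) as [Ex Ey].
  pose proof (mink N Bc x y HB) as Hm. rewrite !Hsum in Hm. rewrite Ex, Ey in Hm.
  unfold w. idtac.
  assert (Hlow : (a + be) * w i <= sqrt ((a * x i - b * y i + be * x i) * (a * x i - b * y i + be * x i) + (b * x i + a * y i + be * y i) * (b * x i + a * y i + be * y i))).
  { unfold w. rewrite <- (sqrt_square (a + be)) at 1 by lra. rewrite <- sqrt_mult by nra.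
    apply sqrt_le_1_alt. nra. }
  unfold w in Hlow. lra.
Qed.


Lemma dplus f g x l1 l2 : derivable_pt_lim f x l1 -> derivable_pt_lim g x l2 ->
  derivable_pt_lim (fun s => f s + g s) x (l1 + l2).
Proof. intros; apply (derivable_pt_lim_plus f g); auto. Qed.
Lemma dminus f g x l1 l2 : derivable_pt_lim f x l1 -> derivable_pt_lim g x l2 ->
  derivable_pt_lim (fun s => f s - g s) x (l1 - l2).
Proof. intros; apply (derivable_pt_lim_minus f g); auto. Qed.
Lemma dconst c x : derivable_pt_lim (fun _ => c) x 0.
Proof. apply (derivable_pt_lim_const c). Qed.
Lemma dexp c L x : derivable_pt_lim (fun s => c * exp (L * s)) x (c * (L * exp (L * x))).
Proof.
  apply (derivable_pt_lim_scal (fun s => exp (L * s))).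
  assert (H := derivable_pt_lim_comp (fun s => L * s) exp x L (exp (L * x))).
  replace (L * exp (L * x)) with (exp (L * x) * L) by ring. apply H.
  - assert (H1 := derivable_pt_lim_scal id L x 1 (derivable_pt_lim_id x)). rewrite Rmult_1_r in H1. exact H1.
  - apply derivable_pt_lim_exp.
Qed.
Lemma dlin c s x : derivable_pt_lim (fun t => c + s * t) x s.
Proof.
  assert (H1 := derivable_pt_lim_scal id s x 1 (derivable_pt_lim_id x)). rewrite Rmult_1_r in H1.
  assert (H2 := dplus (fun _ => c) (fun t => s*t) x 0 s (dconst c x) H1). rewrite Rplus_0_l in H2. exact H2.
Qed.

Lemma der_ctn f x l : derivable_pt_lim f x l -> ctn f x.
Proof. intros H e He. apply (dcont f x l H e He). Qed.

Definition cvec (c : R) : vec := fun _ => c.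

Section Dyn.
Variables (N : nat) (ER ET : nat -> nat -> Prop) (theta delta : nat -> R) (f g : nat -> vec -> R)
  (J : nat -> nat -> R) (Rr Tt : R -> vec).
Hypothesis Hsc : strongly_connected N ER.
Hypothesis Hpar : forall i, (i < N)%nat -> theta i > 0 /\ delta i > 0.
Hypothesis Hf : admissible N ER f.
Hypothesis Hg : admissible N ET g.
Hypothesis HJ : forall i j, (i < N)%nat -> (j < N)%nat -> partial_at (f i) j zerov (J i j).
Hypothesis Hsol : is_solution N f g theta delta Rr Tt.
Hypothesis Hinit : forall i, (i < N)%nat -> 0 <= Rr 0 i /\ 0 <= Tt 0 i /\ Rr 0 i + Tt 0 i <= 1.
Hypothesis Hpos : forall i, (i < N)%nat -> Rr 0 i > 0.

Lemma fmono i x y : (i < N)%nat -> (forall k, (k < N)%nat -> x k <= y k) -> f i x <= f i y.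
Proof. intros Hi. destruct (Hf i Hi) as [H1 [_ [[Hc _] [H4 _]]]]. apply (mono N ER i); auto. Qed.
Lemma gmono i x y : (i < N)%nat -> (forall k, (k < N)%nat -> x k <= y k) -> g i x <= g i y.
Proof. intros Hi. destruct (Hg i Hi) as [H1 [_ [[Hc _] [H4 _]]]]. apply (mono N ET i); auto. Qed.
Lemma f0 i : (i < N)%nat -> f i zerov = 0.
Proof. intros Hi. apply (Hf i Hi). Qed.
Lemma g0 i : (i < N)%nat -> g i zerov = 0.
Proof. intros Hi. apply (Hg i Hi). Qed.

Lemma dR i t : (i < N)%nat -> t > 0 -> derivable_pt_lim (fun s => Rr s i) t
  (Tt t i * f i (Rr t) - Rr t i * g i (Tt t) - theta i * Rr t i).
Proof. intros; apply (proj2 Hsol i t); auto. Qed.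
Lemma dT i t : (i < N)%nat -> t > 0 -> derivable_pt_lim (fun s => Tt s i) t
  (Rr t i * g i (Tt t) - Tt t i * f i (Rr t) + delta i * (1 - Rr t i - Tt t i)).
Proof. intros; apply (proj2 Hsol i t); auto. Qed.

Lemma rc0 i : (i < N)%nat -> forall e, e > 0 -> exists d, d > 0 /\ forall t, 0 <= t < d ->
  Rabs (Rr t i - Rr 0 i) < e /\ Rabs (Tt t i - Tt 0 i) < e.
Proof. intros; apply (proj1 Hsol i); auto. Qed.

Lemma rc_at (h : R -> R) (t0 : R) : t0 > 0 -> ctn h t0 -> forall e, e > 0 -> exists d, d > 0 /\
  forall t, t0 <= t < t0 + d -> Rabs (h t - h t0) < e.
Proof.
  intros Ht0 Hc e He. destruct (Hc e He) as [d [Hd Hq]]. exists d; split; auto.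
  intros t Ht. apply Hq. rewrite Rabs_pos_eq; lra.
Qed.

Definition Fc i := f i (cvec 2).
Definition Ac i := - f i (cvec (-1)).
Definition Gc i := g i (cvec 2).
Definition Bc i := - g i (cvec (-1)).
Definition Lc := 1 + vsum N (fun i => 2 * (Fc i + Ac i + Gc i + Bc i) + theta i + delta i).

Lemma consts_nonneg i : (i < N)%nat -> 0 <= Fc i /\ 0 <= Ac i /\ 0 <= Gc i /\ 0 <= Bc i.
Proof.
  intros Hi. unfold Fc, Ac, Gc, Bc.
  pose proof (f0 i Hi). pose proof (g0 i Hi).
  pose proof (fmono i zerov (cvec 2) Hi ltac:(intros; unfold zerov, cvec; lra)).
  pose proof (fmono i (cvec (-1)) zerov Hi ltac:(intros; unfold zerov, cvec; lra)).
  pose proof (gmono i zerov (cvec 2) Hi ltac:(intros; unfold zerov, cvec; lra)).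
  pose proof (gmono i (cvec (-1)) zerov Hi ltac:(intros; unfold zerov, cvec; lra)).
  lra.
Qed.

Lemma Lc_big i : (i < N)%nat -> 1 + (2 * (Fc i + Ac i + Gc i + Bc i) + theta i + delta i) <= Lc.
Proof.
  intros Hi. unfold Lc. apply Rplus_le_compat_l.
  apply (vsum_ge_term N (fun i => 2 * (Fc i + Ac i + Gc i + Bc i) + theta i + delta i)); auto.
  intros j Hj. destruct (consts_nonneg j Hj) as [? [? [? ?]]]. destruct (Hpar j Hj). lra.
Qed.

Lemma Lc_pos : Lc >= 1.
Proof.
  unfold Lc. assert (0 <= vsum N (fun i => 2 * (Fc i + Ac i + Gc i + Bc i) + theta i + delta i)); [|lra].
  apply vsum_nonneg. intros j Hj. destruct (consts_nonneg j Hj) as [? [? [? ?]]]. destruct (Hpar j Hj). lra.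
Qed.

Definition phi eps t := eps * exp (Lc * t).

Definition hinv eps (k : nat) (t : R) : R :=
  if Nat.ltb k N then Rr t k + phi eps t
  else if Nat.ltb k (2 * N)%nat then Tt t (k - N)%nat + phi eps t
  else 1 + phi eps t - Rr t (k - 2 * N)%nat - Tt t (k - 2 * N)%nat.

Lemma hinv_R eps j t : (j < N)%nat -> hinv eps j t = Rr t j + phi eps t.
Proof. intros Hj. unfold hinv. destruct (Nat.ltb_spec j N); [auto|lia]. Qed.
Lemma hinv_T eps j t : (j < N)%nat -> hinv eps (N + j)%nat t = Tt t j + phi eps t.
Proof. intros Hj. unfold hinv. destruct (Nat.ltb_spec (N + j) N); [lia|].
  destruct (Nat.ltb_spec (N + j) (2 * N)); [|lia]. replace (N + j - N)%nat with j by lia. auto. Qed.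
Lemma hinv_U eps j t : (j < N)%nat -> hinv eps (2 * N + j)%nat t = 1 + phi eps t - Rr t j - Tt t j.
Proof. intros Hj. unfold hinv. destruct (Nat.ltb_spec (2 * N + j) N); [lia|].
  destruct (Nat.ltb_spec (2 * N + j) (2 * N)); [lia|]. replace (2 * N + j - 2 * N)%nat with j by lia. auto. Qed.

Lemma decode k : (k < 3 * N)%nat -> exists j, (j < N)%nat /\ (k = j \/ k = N + j \/ k = 2 * N + j)%nat.
Proof.
  intros Hk. destruct (Nat.ltb_spec k N). { exists k; split; auto. }
  destruct (Nat.ltb_spec k (2 * N)). { exists (k - N)%nat%nat; split; [lia|]. right; left; lia. }
  exists (k - 2 * N)%nat%nat; split; [lia|]. right; right; lia.
Qed.

Lemma hinv_form eps k : (k < 3 * N)%nat -> exists i c0 a b, (i < N)%nat /\ Rabs a <= 1 /\ Rabs b <= 1 /\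
  hinv eps k = fun s => c0 + a * Rr s i + b * Tt s i + phi eps s.
Proof.
  intros Hk. destruct (decode k Hk) as [j [Hj [-> | [-> | ->]]]].
  - exists j, 0, 1, 0. split; [auto|]. split; [rewrite ?Rabs_R1, ?Rabs_R0; lra|]. split; [rewrite ?Rabs_R1, ?Rabs_R0; lra|].
    apply functional_extensionality; intro s. rewrite hinv_R by auto. ring.
  - exists j, 0, 0, 1. split; [auto|]. split; [rewrite ?Rabs_R1, ?Rabs_R0; lra|]. split; [rewrite ?Rabs_R1, ?Rabs_R0; lra|].
    apply functional_extensionality; intro s. rewrite hinv_T by auto. ring.
  - exists j, 1, (-1), (-1). split; [auto|]. split; [rewrite Rabs_left; lra|]. split; [rewrite Rabs_left; lra|].
    apply functional_extensionality; intro s. rewrite hinv_U by auto. ring.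
Qed.

Lemma dcomb eps i c0 a b t : (i < N)%nat -> t > 0 ->
  derivable_pt_lim (fun s => c0 + a * Rr s i + b * Tt s i + phi eps s) t
   (a * (Tt t i * f i (Rr t) - Rr t i * g i (Tt t) - theta i * Rr t i)
    + b * (Rr t i * g i (Tt t) - Tt t i * f i (Rr t) + delta i * (1 - Rr t i - Tt t i))
    + eps * (Lc * exp (Lc * t))).
Proof.
  intros Hi Ht. apply dplus; [|apply dexp].
  replace (a * (Tt t i * f i (Rr t) - Rr t i * g i (Tt t) - theta i * Rr t i) +
    b * (Rr t i * g i (Tt t) - Tt t i * f i (Rr t) + delta i * (1 - Rr t i - Tt t i)))
   with (0 + a * (Tt t i * f i (Rr t) - Rr t i * g i (Tt t) - theta i * Rr t i) +
    b * (Rr t i * g i (Tt t) - Tt t i * f i (Rr t) + delta i * (1 - Rr t i - Tt t i))) by ring.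
  apply dplus; [apply dplus; [apply dconst|]|].
  - apply (derivable_pt_lim_scal (fun s => Rr s i)). apply dR; auto.
  - apply (derivable_pt_lim_scal (fun s => Tt s i)). apply dT; auto.
Qed.

Lemma rc_comb eps i c0 a b : (i < N)%nat -> Rabs a <= 1 -> Rabs b <= 1 ->
  forall e, e > 0 -> exists d, d > 0 /\ forall t, 0 <= t < d ->
  Rabs ((c0 + a * Rr t i + b * Tt t i + phi eps t) - (c0 + a * Rr 0 i + b * Tt 0 i + phi eps 0)) < e.
Proof.
  intros Hi Ha Hb e He.
  destruct (rc0 i Hi (e/3) ltac:(lra)) as [d1 [Hd1 Hq1]].
  destruct (dcont (phi eps) 0 _ (dexp eps Lc 0) (e/3) ltac:(lra)) as [d2 [Hd2 Hq2]].
  exists (Rmin d1 d2). split; [apply Rmin_glb_lt; auto|].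
  intros t Ht. pose proof (Rmin_l d1 d2). pose proof (Rmin_r d1 d2).
  destruct (Hq1 t ltac:(lra)) as [HR HT].
  assert (Hp : Rabs (phi eps t - phi eps 0) < e/3) by (apply Hq2; rewrite Rminus_0_r, Rabs_pos_eq; lra).
  replace ((c0 + a * Rr t i + b * Tt t i + phi eps t) - (c0 + a * Rr 0 i + b * Tt 0 i + phi eps 0))
    with (a * (Rr t i - Rr 0 i) + b * (Tt t i - Tt 0 i) + (phi eps t - phi eps 0)) by ring.
  eapply Rle_lt_trans; [apply Rabs_triang|].
  eapply Rle_lt_trans; [apply Rplus_le_compat_r, Rabs_triang|].
  rewrite !Rabs_mult.
  assert (Rabs a * Rabs (Rr t i - Rr 0 i) <= Rabs (Rr t i - Rr 0 i)).
  { rewrite <- (Rmult_1_l (Rabs (Rr t i - Rr 0 i))) at 2. apply Rmult_le_compat_r; auto; apply Rabs_pos. }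
  assert (Rabs b * Rabs (Tt t i - Tt 0 i) <= Rabs (Tt t i - Tt 0 i)).
  { rewrite <- (Rmult_1_l (Rabs (Tt t i - Tt 0 i))) at 2. apply Rmult_le_compat_r; auto; apply Rabs_pos. }
  lra.
Qed.

Lemma prod_low p A F T Fm : 0 <= p -> -p <= T <= 2 -> -p * A <= F <= Fm -> 0 <= A -> 0 <= Fm ->
  T * F >= - p * (Fm + 2 * A).
Proof.
  intros Hp HT HF HA HFm. destruct (Rle_dec 0 F).
  - assert ((T + p) * F >= 0) by (apply Rle_ge, Rmult_le_pos; lra). nra.
  - assert ((2 - T) * (- F) >= 0) by (apply Rle_ge, Rmult_le_pos; lra). nra.
Qed.

Lemma inv_eps tau eps : tau > 0 -> eps > 0 -> eps * exp (Lc * tau) <= 1/2 ->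
  forall t, 0 <= t <= tau -> forall k, (k < 3 * N)%nat -> hinv eps k t > 0.
Proof.
  intros Htau Heps Hsmall t Ht k Hk.
  apply (cross (3 * N) (fun _ => True) (hinv eps) 0 tau) with (t := t); auto.
  - intros k' Hk' _. destruct (decode k' Hk') as [j [Hj [-> | [-> | ->]]]];
      [rewrite hinv_R|rewrite hinv_T|rewrite hinv_U]; auto; unfold phi; rewrite Rmult_0_r, exp_0, Rmult_1_r;
      destruct (Hinit j Hj); lra.
  - intros k' Hk' _ e He. destruct (hinv_form eps k' Hk') as [i [c0 [a [b [Hi [Ha [Hb Heq]]]]]]].
    rewrite Heq. destruct (rc_comb eps i c0 a b Hi Ha Hb e He) as [d [Hd Hq]].
    exists d; split; auto. intros t' Ht'. apply Hq. lra.
  - intros k' Hk' _ t' Ht'. destruct (hinv_form eps k' Hk') as [i [c0 [a [b [Hi [Ha [Hb Heq]]]]]]].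
    rewrite Heq. eapply der_ctn. apply dcomb; auto; lra.
  - intros t1 Ht1 Hbefore Hnow k' Hk' _ Hzero.
    set (p := phi eps t1).
    assert (Hp0 : 0 < p) by (unfold p, phi; apply Rmult_lt_0_compat; auto; apply exp_pos).
    assert (Hp1 : p <= 1/2).
    { unfold p, phi. apply Rle_trans with (eps * exp (Lc * tau)); auto.
      apply Rmult_le_compat_l; [lra|]. destruct (Rle_lt_or_eq_dec t1 tau ltac:(lra)) as [Hlt| ->]; [|lra].
      left; apply exp_increasing. pose proof Lc_pos. apply Rmult_lt_compat_l; lra. }
    assert (HRl : forall j, (j < N)%nat -> Rr t1 j >= - p).
    { intros j Hj. specialize (Hnow j ltac:(lia) I). rewrite hinv_R in Hnow by auto. fold p in Hnow. lra. }
    assert (HTl : forall j, (j < N)%nat -> Tt t1 j >= - p).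
    { intros j Hj. specialize (Hnow (N + j)%nat ltac:(lia) I). rewrite hinv_T in Hnow by auto. fold p in Hnow. lra. }
    assert (HUl : forall j, (j < N)%nat -> Rr t1 j + Tt t1 j <= 1 + p).
    { intros j Hj. specialize (Hnow (2 * N + j)%nat ltac:(lia) I). rewrite hinv_U in Hnow by auto. fold p in Hnow. lra. }
    assert (HRu : forall j, (j < N)%nat -> Rr t1 j <= 2).
    { intros j Hj. specialize (HRl j Hj). specialize (HTl j Hj). specialize (HUl j Hj). lra. }
    assert (HTu : forall j, (j < N)%nat -> Tt t1 j <= 2).
    { intros j Hj. specialize (HRl j Hj). specialize (HTl j Hj). specialize (HUl j Hj). lra. }
    assert (Hfb : forall i, (i < N)%nat -> - p * Ac i <= f i (Rr t1) <= Fc i).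
    { intros i Hi. split.
      - apply Rle_trans with (f i (cvec (- p))).
        + unfold Ac. replace (- p * - f i (cvec (-1))) with (p * f i (cvec (-1))) by ring.
          apply concave_low; [apply (Hf i Hi)|apply f0; auto|lra].
        + apply fmono; auto. intros j Hj. unfold cvec. specialize (HRl j Hj). lra.
      - apply fmono; auto; intros j Hj; unfold cvec; apply HRu; auto. }
    assert (Hgb : forall i, (i < N)%nat -> - p * Bc i <= g i (Tt t1) <= Gc i).
    { intros i Hi. split.
      - apply Rle_trans with (g i (cvec (- p))).
        + unfold Bc. replace (- p * - g i (cvec (-1))) with (p * g i (cvec (-1))) by ring.
          apply concave_low; [apply (Hg i Hi)|apply g0; auto|lra].
        + apply gmono; auto. intros j Hj. unfold cvec. specialize (HTl j Hj). lra.
      - apply gmono; auto; intros j Hj; unfold cvec; apply HTu; auto. }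
    assert (Hphi : eps * (Lc * exp (Lc * t1)) = Lc * p) by (unfold p, phi; ring).
    destruct (decode k' Hk') as [i [Hi [Ek | [Ek | Ek]]]]; subst k';
    pose proof (Lc_big i Hi) as HL; destruct (consts_nonneg i Hi) as [HF [HA [HG HB]]];
    destruct (Hpar i Hi) as [Hth Hde];
    specialize (Hfb i Hi); specialize (Hgb i Hi);
    specialize (HRl i Hi); specialize (HTl i Hi); specialize (HUl i Hi); specialize (HRu i Hi); specialize (HTu i Hi).
    + assert (Hfun : hinv eps i = fun s => 0 + 1 * Rr s i + 0 * Tt s i + phi eps s)
        by (apply functional_extensionality; intro s; rewrite hinv_R by auto; ring).
      assert (Hl := touch (hinv eps i) 0 t1 _ ltac:(rewrite Hfun; apply (dcomb eps i 0 1 0 t1 Hi); lra)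
        ltac:(lra) (fun s Hs => Hbefore i Hk' I s Hs) Hzero).
      rewrite Hphi in Hl. rewrite hinv_R in Hzero by auto. fold p in Hzero.
      assert (Rr t1 i = - p) by lra.
      pose proof (prod_low p (Ac i) (f i (Rr t1)) (Tt t1 i) (Fc i) ltac:(lra) ltac:(lra) Hfb HA HF).
      assert (p * g i (Tt t1) >= - p * Bc i).
      { destruct Hgb. assert (p * (g i (Tt t1) + p * Bc i) >= 0) by (apply Rle_ge, Rmult_le_pos; lra).
        assert (p * Bc i * (1 - p) >= 0) by (apply Rle_ge, Rmult_le_pos; [apply Rmult_le_pos|]; lra). nra. }
      rewrite H in Hl. nra.
    + assert (Hfun : hinv eps (N + i)%nat = fun s => 0 + 0 * Rr s i + 1 * Tt s i + phi eps s)
        by (apply functional_extensionality; intro s; rewrite hinv_T by auto; ring).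
      assert (Hl := touch (hinv eps (N + i)%nat) 0 t1 _ ltac:(rewrite Hfun; apply (dcomb eps i 0 0 1 t1 Hi); lra)
        ltac:(lra) (fun s Hs => Hbefore (N + i)%nat Hk' I s Hs) Hzero).
      rewrite Hphi in Hl. rewrite hinv_T in Hzero by auto. fold p in Hzero.
      assert (Tt t1 i = - p) by lra.
      pose proof (prod_low p (Bc i) (g i (Tt t1)) (Rr t1 i) (Gc i) ltac:(lra) ltac:(lra) Hgb HB HG).
      assert (p * f i (Rr t1) >= - p * Ac i).
      { destruct Hfb. assert (p * (f i (Rr t1) + p * Ac i) >= 0) by (apply Rle_ge, Rmult_le_pos; lra).
        assert (p * Ac i * (1 - p) >= 0) by (apply Rle_ge, Rmult_le_pos; [apply Rmult_le_pos|]; lra). nra. }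
      assert (delta i * (1 - Rr t1 i - Tt t1 i) >= - delta i * p).
      { assert (delta i * (1 + p - Rr t1 i - Tt t1 i) >= 0) by (apply Rle_ge, Rmult_le_pos; lra). nra. }
      rewrite H in Hl, H2. nra.
    + assert (Hfun : hinv eps (2 * N + i)%nat = fun s => 1 + (-1) * Rr s i + (-1) * Tt s i + phi eps s)
        by (apply functional_extensionality; intro s; rewrite hinv_U by auto; ring).
      assert (Hl := touch (hinv eps (2 * N + i)%nat) 0 t1 _ ltac:(rewrite Hfun; apply (dcomb eps i 1 (-1) (-1) t1 Hi); lra)
        ltac:(lra) (fun s Hs => Hbefore (2 * N + i)%nat Hk' I s Hs) Hzero).
      rewrite Hphi in Hl. rewrite hinv_U in Hzero by auto. fold p in Hzero.
      assert (theta i * Rr t1 i >= - theta i * p).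
      { assert (theta i * (Rr t1 i + p) >= 0) by (apply Rle_ge, Rmult_le_pos; lra). nra. }
      nra.
Qed.

Lemma small_phi q tau t : q > 0 -> tau > 0 -> 0 <= t <= tau ->
  exists eps, eps > 0 /\ eps * exp (Lc * tau) <= 1/2 /\ phi eps t < q.
Proof.
  intros Hq Htau Ht. set (m := Rmin (1/2) (q/2)).
  assert (Hm : 0 < m) by (apply Rmin_glb_lt; lra).
  pose proof (exp_pos (Lc * tau)) as He.
  exists (m / exp (Lc * tau)). split; [apply Rdiv_lt_0_compat; auto|]. split.
  - replace (m / exp (Lc * tau) * exp (Lc * tau)) with m by (field; lra). apply Rmin_l.
  - unfold phi. apply Rle_lt_trans with (m / exp (Lc * tau) * exp (Lc * tau)).
    + apply Rmult_le_compat_l. { left; apply Rdiv_lt_0_compat; auto. }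
      destruct (Rle_lt_or_eq_dec t tau ltac:(lra)) as [Hlt| ->]; [|lra].
      left; apply exp_increasing. pose proof Lc_pos. apply Rmult_lt_compat_l; lra.
    + replace (m / exp (Lc * tau) * exp (Lc * tau)) with m by (field; lra).
      pose proof (Rmin_r (1/2) (q/2)). fold m in H. lra.
Qed.

Lemma inv t i : 0 <= t -> (i < N)%nat -> 0 <= Rr t i /\ 0 <= Tt t i /\ Rr t i + Tt t i <= 1.
Proof.
  intros Ht Hi.
  assert (Hq0 : forall q, q > 0 -> Rr t i + q > 0 /\ Tt t i + q > 0 /\ 1 + q - Rr t i - Tt t i > 0).
  { intros q Hq. destruct (small_phi q (t + 1) t Hq ltac:(lra) ltac:(lra)) as [eps [He [Hs Hp]]].
    pose proof (inv_eps (t + 1) eps ltac:(lra) He Hs t ltac:(lra)) as HH.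
    pose proof (HH i ltac:(lia)) as H1. pose proof (HH (N + i)%nat ltac:(lia)) as H2.
    pose proof (HH (2 * N + i)%nat ltac:(lia)) as H3.
    rewrite hinv_R in H1 by auto. rewrite hinv_T in H2 by auto. rewrite hinv_U in H3 by auto.
    assert (0 < phi eps t) by (unfold phi; apply Rmult_lt_0_compat; auto; apply exp_pos).
    lra. }
  split; [|split].
  - apply Rnot_lt_le; intro C. destruct (Hq0 (- Rr t i / 2) ltac:(lra)) as [H _]. lra.
  - apply Rnot_lt_le; intro C. destruct (Hq0 (- Tt t i / 2) ltac:(lra)) as [_ [H _]]. lra.
  - apply Rnot_lt_le; intro C. destruct (Hq0 ((Rr t i + Tt t i - 1) / 2) ltac:(lra)) as [_ [_ H]]. lra.
Qed.

Lemma dgen i c0 a b psi l t : (i < N)%nat -> t > 0 -> derivable_pt_lim psi t l ->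
  derivable_pt_lim (fun s => c0 + a * Rr s i + b * Tt s i + psi s) t
   (a * (Tt t i * f i (Rr t) - Rr t i * g i (Tt t) - theta i * Rr t i)
    + b * (Rr t i * g i (Tt t) - Tt t i * f i (Rr t) + delta i * (1 - Rr t i - Tt t i))
    + l).
Proof.
  intros Hi Ht Hpsi. apply dplus; auto.
  replace (a * (Tt t i * f i (Rr t) - Rr t i * g i (Tt t) - theta i * Rr t i) +
    b * (Rr t i * g i (Tt t) - Tt t i * f i (Rr t) + delta i * (1 - Rr t i - Tt t i)))
   with (0 + a * (Tt t i * f i (Rr t) - Rr t i * g i (Tt t) - theta i * Rr t i) +
    b * (Rr t i * g i (Tt t) - Tt t i * f i (Rr t) + delta i * (1 - Rr t i - Tt t i))) by ring.
  apply dplus; [apply dplus; [apply dconst|]|].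
  - apply (derivable_pt_lim_scal (fun s => Rr s i)). apply dR; auto.
  - apply (derivable_pt_lim_scal (fun s => Tt s i)). apply dT; auto.
Qed.

Lemma rc_gen i c0 a b psi : (i < N)%nat -> Rabs a <= 1 -> Rabs b <= 1 -> ctn psi 0 ->
  forall e, e > 0 -> exists d, d > 0 /\ forall t, 0 <= t < 0 + d ->
  Rabs ((c0 + a * Rr t i + b * Tt t i + psi t) - (c0 + a * Rr 0 i + b * Tt 0 i + psi 0)) < e.
Proof.
  intros Hi Ha Hb Hpsi e He.
  destruct (rc0 i Hi (e/3) ltac:(lra)) as [d1 [Hd1 Hq1]].
  destruct (Hpsi (e/3) ltac:(lra)) as [d2 [Hd2 Hq2]].
  exists (Rmin d1 d2). split; [apply Rmin_glb_lt; auto|].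
  intros t Ht. pose proof (Rmin_l d1 d2). pose proof (Rmin_r d1 d2).
  destruct (Hq1 t ltac:(lra)) as [HR HT].
  assert (Hp : Rabs (psi t - psi 0) < e/3) by (apply Hq2; rewrite Rminus_0_r, Rabs_pos_eq; lra).
  replace ((c0 + a * Rr t i + b * Tt t i + psi t) - (c0 + a * Rr 0 i + b * Tt 0 i + psi 0))
    with (a * (Rr t i - Rr 0 i) + b * (Tt t i - Tt 0 i) + (psi t - psi 0)) by ring.
  eapply Rle_lt_trans; [apply Rabs_triang|].
  eapply Rle_lt_trans; [apply Rplus_le_compat_r, Rabs_triang|].
  rewrite !Rabs_mult.
  assert (Rabs a * Rabs (Rr t i - Rr 0 i) <= Rabs (Rr t i - Rr 0 i)).
  { rewrite <- (Rmult_1_l (Rabs (Rr t i - Rr 0 i))) at 2. apply Rmult_le_compat_r; auto; apply Rabs_pos. }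
  assert (Rabs b * Rabs (Tt t i - Tt 0 i) <= Rabs (Tt t i - Tt 0 i)).
  { rewrite <- (Rmult_1_l (Rabs (Tt t i - Tt 0 i))) at 2. apply Rmult_le_compat_r; auto; apply Rabs_pos. }
  lra.
Qed.

Lemma fR_nonneg i t : (i < N)%nat -> 0 <= t -> 0 <= f i (Rr t).
Proof. intros Hi Ht. rewrite <- (f0 i Hi). apply fmono; auto. intros k Hk. unfold zerov. apply (inv t k Ht Hk). Qed.
Lemma gT_le i t : (i < N)%nat -> 0 <= t -> g i (Tt t) <= g i onev.
Proof. intros Hi Ht. apply gmono; auto. intros k Hk. unfold onev. pose proof (inv t k Ht Hk). lra. Qed.
Lemma g1_nonneg i : (i < N)%nat -> 0 <= g i onev.
Proof. intros Hi. rewrite <- (g0 i Hi). apply gmono; auto. intros k Hk. unfold zerov, onev. lra. Qed.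

Lemma Rpos i t : (i < N)%nat -> 0 <= t -> Rr t i > 0.
Proof.
  intros Hi Ht. set (K := g i onev + theta i). set (rho := Rr 0 i / 2).
  assert (HK : 0 <= K) by (unfold K; pose proof (g1_nonneg i Hi); destruct (Hpar i Hi); lra).
  pose proof (Hpos i Hi) as H0.
  set (psi := fun s => (- rho) * exp ((- (K + 1)) * s)).
  assert (Hd : forall s, derivable_pt_lim psi s ((- rho) * ((- (K + 1)) * exp ((- (K + 1)) * s)))) by (intros; apply dexp).
  assert (Hc := cross 1 (fun _ => True) (fun _ s => 0 + 1 * Rr s i + 0 * Tt s i + psi s) 0 t).
  assert (Hr : 0 + 1 * Rr t i + 0 * Tt t i + psi t > 0).
  { apply Hc with (k := 0%nat); auto; try lra.
    - intros. unfold psi. rewrite Rmult_0_r, exp_0. unfold rho. lra.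
    - intros k _ _ e He. apply (rc_gen i 0 1 0 psi Hi); try (rewrite ?Rabs_R1, ?Rabs_R0; lra); auto.
      apply (der_ctn _ _ _ (Hd 0)).
    - intros k _ _ s Hs. apply (der_ctn _ _ _ (dgen i 0 1 0 psi _ s Hi ltac:(lra) (Hd s))).
    - intros t1 Ht1 Hbef Hnow k Hk _ Hz.
      assert (Hl := touch _ 0 t1 _ (dgen i 0 1 0 psi _ t1 Hi ltac:(lra) (Hd t1)) ltac:(lra)
        (fun s Hs => Hbef k Hk I s Hs) Hz).
      set (q := rho * exp ((- (K + 1)) * t1)) in *.
      assert (Hq : q > 0) by (unfold q, rho; apply Rmult_lt_0_compat; [lra|apply exp_pos]).
      assert (Hpq : psi t1 = - q) by (unfold psi, q; ring). assert (HR : Rr t1 i = q) by lra.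
      pose proof (inv t1 i ltac:(lra) Hi) as [_ [HT _]].
      pose proof (fR_nonneg i t1 Hi ltac:(lra)). pose proof (gT_le i t1 Hi ltac:(lra)).
      assert (Tt t1 i * f i (Rr t1) >= 0) by (apply Rle_ge, Rmult_le_pos; auto).
      assert (Rr t1 i * g i (Tt t1) <= q * g i onev) by (rewrite HR; apply Rmult_le_compat_l; lra).
      replace ((- rho) * ((- (K + 1)) * exp ((- (K + 1)) * t1))) with ((K + 1) * q) in Hl by (unfold q; ring).
      unfold K in Hl. rewrite HR in Hl. nra. }
  unfold psi in Hr. pose proof (exp_pos ((- (K + 1)) * t)). unfold rho in Hr. nra.
Qed.

Definition kap i := delta i / (theta i + delta i).

Lemma kap_prop i : (i < N)%nat -> 0 < kap i < 1 /\ (theta i + delta i) * kap i = delta i.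
Proof.
  intros Hi. destruct (Hpar i Hi). unfold kap. split; [split|].
  - apply Rdiv_lt_0_compat; lra.
  - apply Rmult_lt_reg_r with (theta i + delta i); [lra|]. unfold Rdiv. rewrite Rmult_assoc, Rinv_l by lra. lra.
  - field; lra.
Qed.

Lemma dU i t : (i < N)%nat -> t > 0 -> forall c0 psi l, derivable_pt_lim psi t l ->
  derivable_pt_lim (fun s => c0 + 1 * Rr s i + 1 * Tt s i + psi s) t (- theta i * Rr t i + delta i * (1 - Rr t i - Tt t i) + l).
Proof.
  intros Hi Ht c0 psi l Hl. assert (H := dgen i c0 1 1 psi l t Hi Ht Hl).
  match goal with H : derivable_pt_lim _ _ ?v |- derivable_pt_lim _ _ ?w => replace w with v by ring end. exact H.
Qed.

Lemma Ubound i ep : (i < N)%nat -> 0 < ep < kap i ->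
  exists T0, T0 > 0 /\ forall t, t >= T0 -> Rr t i + Tt t i > kap i - ep.
Proof.
  intros Hi Hep. destruct (kap_prop i Hi) as [Hka Hk2]. destruct (Hpar i Hi) as [Hth Hde].
  set (sg := (theta i + delta i) * ep / 2).
  assert (Hsg : sg > 0) by (unfold sg; apply Rdiv_lt_0_compat; [apply Rmult_lt_0_compat|]; lra).
  set (tau := (kap i - ep) / sg).
  assert (Htau : tau > 0) by (unfold tau; apply Rdiv_lt_0_compat; lra).
  set (psi := fun s => 0 + (- sg) * s).
  assert (Hd : forall s, derivable_pt_lim psi s (- sg)) by (intros; apply dlin).
  assert (Hstage1 : Rr tau i + Tt tau i > kap i - ep).
  { assert (Hc := cross 1 (fun _ => True) (fun _ s => 0 + 1 * Rr s i + 1 * Tt s i + psi s) 0 tau).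
    assert (Hr : 0 + 1 * Rr tau i + 1 * Tt tau i + psi tau > 0).
    { apply Hc with (k := 0%nat); auto; try lra.
      - intros. unfold psi. pose proof (Hpos i Hi). pose proof (Hinit i Hi). lra.
      - intros k _ _ e He. apply (rc_gen i 0 1 1 psi Hi); try (rewrite ?Rabs_R1; lra); auto.
        apply (der_ctn _ _ _ (Hd 0)).
      - intros k _ _ s Hs. apply (der_ctn _ _ _ (dU i s Hi ltac:(lra) 0 psi _ (Hd s))).
      - intros t1 Ht1 Hbef Hnow k Hk _ Hz.
        assert (Hl := touch _ 0 t1 _ (dU i t1 Hi ltac:(lra) 0 psi _ (Hd t1)) ltac:(lra)
          (fun s Hs => Hbef k Hk I s Hs) Hz).
        unfold psi in Hz. pose proof (inv t1 i ltac:(lra) Hi) as [HR [HT HU]].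
        assert (HU2 : Rr t1 i + Tt t1 i <= kap i - ep).
        { assert (sg * t1 <= sg * tau) by (apply Rmult_le_compat_l; lra).
          replace (sg * tau) with (kap i - ep) in H by (unfold tau; field; lra). lra. }
        assert (theta i * Rr t1 i <= theta i * (Rr t1 i + Tt t1 i)) by (apply Rmult_le_compat_l; lra).
        assert ((theta i + delta i) * (Rr t1 i + Tt t1 i) <= (theta i + delta i) * (kap i - ep)) by (apply Rmult_le_compat_l; lra).
        unfold sg in Hl. nra. }
    unfold psi in Hr. assert (E : - sg * tau = - (kap i - ep)) by (unfold tau; field; lra). rewrite E in Hr. lra. }
  exists tau. split; auto. intros t Ht.
  assert (Hc := cross 1 (fun _ => True) (fun _ s => (- (kap i - ep)) + 1 * Rr s i + 1 * Tt s i + (fun _ => 0) s) tau t).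
  assert (Hr : (- (kap i - ep)) + 1 * Rr t i + 1 * Tt t i + (fun _ => 0) t > 0).
  { apply Hc with (k := 0%nat); auto; try lra.
    - intros. lra.
    - intros k _ _ e He. apply (rc_at (fun s => - (kap i - ep) + 1 * Rr s i + 1 * Tt s i + (fun _ => 0) s)); auto. apply (der_ctn _ _ _ (dU i tau Hi Htau _ _ _ (dconst 0 tau))).
    - intros k _ _ s Hs. apply (der_ctn _ _ _ (dU i s Hi ltac:(lra) _ _ _ (dconst 0 s))).
    - intros t1 Ht1 Hbef Hnow k Hk _ Hz.
      assert (Hl := touch _ tau t1 _ (dU i t1 Hi ltac:(lra) _ _ _ (dconst 0 t1)) ltac:(lra)
        (fun s Hs => Hbef k Hk I s Hs) Hz).
      pose proof (inv t1 i ltac:(lra) Hi) as [HR [HT HU]].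
      assert (HU2 : Rr t1 i + Tt t1 i = kap i - ep) by lra.
      assert (theta i * Rr t1 i <= theta i * (Rr t1 i + Tt t1 i)) by (apply Rmult_le_compat_l; lra).
      assert (Hm : (theta i + delta i) * ep > 0) by (apply Rmult_lt_0_compat; lra).
      nra. }
  lra.
Qed.

Lemma J_nonneg i j : (i < N)%nat -> (j < N)%nat -> 0 <= J i j.
Proof.
  intros Hi Hj. destruct (Hf i Hi) as [H1 [_ [[Hc _] [H4 _]]]].
  apply (partial_nonneg N ER i (f i) H1 H4 j zerov). apply HJ; auto.
Qed.

Lemma Q2_entry i j : (i < N)%nat -> Q2 N J theta delta g i j =
  kap i * J i j - (if Nat.eqb i j then theta i + g i onev else 0).
Proof.
  intros Hi. destruct (Hpar i Hi). unfold Q2, kap. destruct (Nat.eqb i j); field; lra.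
Qed.

Lemma Q2_off i j : (i < N)%nat -> (j < N)%nat -> i <> j -> 0 <= Q2 N J theta delta g i j.
Proof.
  intros Hi Hj Hne. rewrite Q2_entry by auto. destruct (Nat.eqb_spec i j); [lia|].
  pose proof (J_nonneg i j Hi Hj). destruct (kap_prop i Hi) as [[? ?] _].
  assert (0 <= kap i * J i j) by (apply Rmult_le_pos; lra). lra.
Qed.

Lemma Q2_row i (w : vec) : (i < N)%nat ->
  vsum N (fun j => Q2 N J theta delta g i j * w j) =
  kap i * vsum N (fun j => J i j * w j) - (theta i + g i onev) * w i.
Proof.
  intros Hi. rewrite <- vsum_scal. rewrite <- (vsum_delta N i ((theta i + g i onev) * w i) Hi).
  unfold Rminus at 1. rewrite <- vsum_opp, <- vsum_plus. apply vsum_ext. intros j Hj.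
  rewrite Q2_entry by auto. destruct (Nat.eqb_spec i j) as [<-|]; ring.
Qed.

Lemma persist_S : spectral_abscissa_pos N (Q2 N J theta delta g) ->
  exists (w : vec) (c Ts : R), c > 0 /\ (exists k, (k < N)%nat /\ w k > 0) /\ (forall j, 0 <= w j) /\
    forall t, t >= Ts -> forall i, (i < N)%nat -> w i > 0 -> Rr t i > c * w i.
Proof.
  intros Hspec.
  destruct (pf_sub N (Q2 N J theta delta g) Q2_off Hspec) as [a [w [Ha [Hw [Hk Hrow]]]]].
  set (W := vsum N w). assert (HW : 0 <= W) by (apply vsum_nonneg; auto).
  assert (Hwle : forall j, (j < N)%nat -> w j <= W) by (intros; apply vsum_ge_term; auto).
  destruct (fin_lower N (fun i => w i > 0) w) as [wmin [Hwm Hwmle]]; [auto|].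
  set (JW := fun i => vsum N (fun j => J i j * w j)).
  assert (HJW : forall i, (i < N)%nat -> 0 <= JW i).
  { intros i Hi. apply vsum_nonneg. intros j Hj. apply Rmult_le_pos; auto. apply J_nonneg; auto. }
  set (JWm := vsum N JW). assert (HJWm0 : 0 <= JWm) by (apply vsum_nonneg; auto).
  assert (HJWm : forall i, (i < N)%nat -> JW i <= JWm) by (intros; apply vsum_ge_term; auto).
  destruct (fin_lower N (fun _ => True) kap) as [km [Hkm Hkmle]].
  { intros i Hi _. apply (kap_prop i Hi). }
  set (eta := a * wmin / (4 * (W + 1))).
  assert (Heta : eta > 0) by (unfold eta; apply Rdiv_lt_0_compat; [apply Rmult_lt_0_compat|]; lra).
  set (ep := Rmin (km / 2) (a * wmin / (4 * (JWm + 1)))).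
  assert (Hep0 : 0 < ep) by (apply Rmin_glb_lt; [lra|apply Rdiv_lt_0_compat; [apply Rmult_lt_0_compat|]; lra]).
  assert (Hep1 : ep <= km / 2) by apply Rmin_l.
  assert (Hep2 : ep <= a * wmin / (4 * (JWm + 1))) by apply Rmin_r.
  destruct (fin_delta N (fun _ => True) (fun i d => forall c, 0 < c <= d ->
     f i (fun k => c * w k) >= c * vsum N (fun j => w j * (J i j - eta)))) as [c0 [Hc0 Htay]].
  { intros k d d' Hd' Hq c Hc. apply Hq; lra. }
  { intros i Hi _. destruct (Hf i Hi) as [_ [Hf0 [[Hcont [D1 [D2 [HD1 [HD1c _]]]]] _]]].
    apply (taylor N (f i) D1 (J i) w Hcont HD1 HD1c (fun j Hj => HJ i j Hi Hj) (fun j _ => Hw j) Hf0 eta Heta). }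
  destruct (fin_event N (fun _ => True) (fun i t => Rr t i + Tt t i > kap i - ep)) as [T1 HT1].
  { intros i Hi _. assert (kap i >= km) by (apply Rle_ge, Hkmle; auto).
    destruct (Ubound i ep Hi ltac:(lra)) as [T0 [_ HT0]]. exists T0; auto. }
  set (Ts := Rmax T1 1). assert (HTs1 : Ts >= T1) by (apply Rle_ge, Rmax_l).
  assert (HTs2 : Ts >= 1) by (apply Rle_ge, Rmax_r).
  destruct (fin_lower N (fun i => w i > 0) (fun i => Rr Ts i / w i)) as [m [Hm Hmle]].
  { intros i Hi Pi. apply Rdiv_lt_0_compat; auto. apply Rpos; auto; lra. }
  set (c := Rmin (Rmin c0 (km / (4 * (W + 1)))) (Rmin (a * wmin / (4 * (W + 1) * (JWm + 1))) (m / 2))).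
  assert (Hcpos : c > 0).
  { unfold c. repeat apply Rmin_glb_lt; try lra.
    - apply Rdiv_lt_0_compat; lra.
    - apply Rdiv_lt_0_compat; [apply Rmult_lt_0_compat; lra|]. apply Rmult_lt_0_compat; lra. }
  assert (Hc1 : c <= c0) by (unfold c; eapply Rle_trans; [apply Rmin_l|apply Rmin_l]).
  assert (Hc2 : c <= km / (4 * (W + 1))) by (unfold c; eapply Rle_trans; [apply Rmin_l|apply Rmin_r]).
  assert (Hc3 : c <= a * wmin / (4 * (W + 1) * (JWm + 1))) by (unfold c; eapply Rle_trans; [apply Rmin_r|apply Rmin_l]).
  assert (Hc4 : c <= m / 2) by (unfold c; eapply Rle_trans; [apply Rmin_r|apply Rmin_r]).
  exists w, c, Ts. split; [auto|]. split; [auto|]. split; [auto|].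
  intros t Ht i Hi Pi.
  set (hh := fun (i : nat) (s : R) => (- (c * w i)) + 1 * Rr s i + 0 * Tt s i + (fun _ => 0) s).
  assert (Hd : forall i s, (i < N)%nat -> s > 0 -> derivable_pt_lim (hh i) s
     (1 * (Tt s i * f i (Rr s) - Rr s i * g i (Tt s) - theta i * Rr s i)
      + 0 * (Rr s i * g i (Tt s) - Tt s i * f i (Rr s) + delta i * (1 - Rr s i - Tt s i)) + 0)).
  { intros i' s Hi' Hs. apply dgen; auto. apply dconst. }
  assert (Hcr := cross N (fun i => w i > 0) hh Ts t).
  assert (hh i t > 0); [|unfold hh in H; lra].
  apply Hcr; auto; try lra.
  - intros k Hk' Pk. unfold hh. specialize (Hmle k Hk' Pk).
    assert (m * w k <= Rr Ts k).
    { apply Rmult_le_compat_r with (r := w k) in Hmle; [|lra].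
      unfold Rdiv in Hmle. rewrite Rmult_assoc, Rinv_l in Hmle by lra. lra. }
    assert (c * w k < m * w k) by (apply Rmult_lt_compat_r; lra). lra.
  - intros k Hk' Pk e He. apply (rc_at (hh k) Ts); [lra| |exact He]. apply (der_ctn _ _ _ (Hd k Ts Hk' ltac:(lra))).
  - intros k Hk' Pk s Hs. apply (der_ctn _ _ _ (Hd k s Hk' ltac:(lra))).
  - intros t1 Ht1 Hbef Hnow j Hj Pj Hz.
    assert (Hl := touch _ Ts t1 _ (Hd j t1 Hj ltac:(lra)) ltac:(lra) (fun s Hs => Hbef j Hj Pj s Hs) Hz).
    unfold hh in Hz. assert (HRj : Rr t1 j = c * w j) by lra.
    assert (Hge : forall k, (k < N)%nat -> c * w k <= Rr t1 k).
    { intros k Hk'. destruct (Rle_lt_or_eq_dec 0 (w k) (Hw k)) as [Pk|Ek].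
      - specialize (Hnow k Hk' Pk). unfold hh in Hnow. lra.
      - rewrite <- Ek, Rmult_0_r. apply (inv t1 k ltac:(lra) Hk'). }
    assert (HF1 : f j (Rr t1) >= f j (fun k => c * w k)) by (apply Rle_ge, fmono; auto).
    assert (HF2 := Htay j Hj I c ltac:(lra)).
    assert (Hvs : vsum N (fun k => w k * (J j k - eta)) = JW j - eta * W).
    { unfold JW, W. rewrite <- vsum_scal. unfold Rminus at 2. rewrite <- vsum_opp, <- vsum_plus.
      apply vsum_ext; intros; ring. }
    rewrite Hvs in HF2.
    assert (HU := HT1 j Hj I t1 ltac:(lra)).
    pose proof (gT_le j t1 Hj ltac:(lra)) as HG. pose proof (g1_nonneg j Hj) as HG1.
    pose proof (fR_nonneg j t1 Hj ltac:(lra)) as HF0.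
    pose proof (Hrow j Hj) as Hrj. rewrite Q2_row in Hrj by auto. fold (JW j) in Hrj.
    destruct (kap_prop j Hj) as [[Hk0 Hk1] _]. assert (Hkj : km <= kap j) by (apply Hkmle; auto).
    destruct (Hpar j Hj) as [Hth Hde].
    specialize (HJW j Hj). specialize (HJWm j Hj). specialize (Hwle j Hj). specialize (Hwmle j Hj Pj).
    set (Fv := f j (Rr t1)) in *. set (Gv := g j (Tt t1)) in *. set (Tv := Tt t1 j) in *.
    set (wi := w j) in *. set (JWi := JW j) in *. set (k := kap j) in *.
    assert (Hcw : c * wi <= c * W) by (apply Rmult_le_compat_l; lra).
    assert (HcW : c * W < km / 4).
    { apply Rle_lt_trans with (km / (4 * (W + 1)) * W). { apply Rmult_le_compat_r; lra. }
      apply Rmult_lt_reg_r with (4 * (W + 1)); [lra|]. unfold Rdiv.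
      replace (km * / (4 * (W + 1)) * W * (4 * (W + 1))) with (km * W) by (field; lra). nra. }
    set (co := k - ep - c * wi).
    assert (Hco : 0 <= co) by (unfold co; lra).
    assert (HTv : Tv > co) by (unfold co; lra).
    set (Lw := c * (JWi - eta * W)).
    assert (S1 : Tv * Fv >= co * Fv) by (apply Rle_ge, Rmult_le_compat_r; lra).
    assert (S2 : co * Fv >= co * Lw) by (apply Rle_ge, Rmult_le_compat_l; unfold Lw; lra).
    assert (HLw : Lw <= c * JWi).
    { unfold Lw. apply Rmult_le_compat_l; [lra|]. assert (0 <= eta * W) by (apply Rmult_le_pos; lra). lra. }
    assert (S3 : (ep + c * wi) * Lw <= (ep + c * wi) * (c * JWi)).
    { apply Rmult_le_compat_l; auto. assert (0 <= c * wi) by (apply Rmult_le_pos; lra). lra. }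
    assert (S4 : Rr t1 j * Gv <= c * wi * g j onev) by (rewrite HRj; apply Rmult_le_compat_l; [apply Rmult_le_pos|]; lra).
    assert (B1 : k * (eta * W) < a * wi / 4).
    { assert (eta * W < a * wmin / 4).
      { unfold eta. apply Rle_lt_trans with (a * wmin * W / (4 * (W + 1))); [right; field; lra|].
        apply Rmult_lt_reg_r with (4 * (W + 1)); [lra|]. unfold Rdiv.
        replace (a * wmin * W * / (4 * (W + 1)) * (4 * (W + 1))) with (a * wmin * W) by (field; lra).
        assert (0 < a * wmin) by (apply Rmult_lt_0_compat; lra). nra. }
      assert (0 <= eta * W) by (apply Rmult_le_pos; lra).
      assert (a * wmin <= a * wi) by (apply Rmult_le_compat_l; lra). nra. }
    assert (B2 : ep * JWi < a * wi / 4).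
    { assert (ep * JWi <= a * wmin / (4 * (JWm + 1)) * JWm).
      { apply Rle_trans with (a * wmin / (4 * (JWm + 1)) * JWi). { apply Rmult_le_compat_r; lra. }
        apply Rmult_le_compat_l; [|lra]. left; apply Rdiv_lt_0_compat; [apply Rmult_lt_0_compat|]; lra. }
      assert (a * wmin / (4 * (JWm + 1)) * JWm < a * wmin / 4).
      { apply Rmult_lt_reg_r with (4 * (JWm + 1)); [lra|]. unfold Rdiv.
        replace (a * wmin * / (4 * (JWm + 1)) * JWm * (4 * (JWm + 1))) with (a * wmin * JWm) by (field; lra).
        assert (0 < a * wmin) by (apply Rmult_lt_0_compat; lra). nra. }
      assert (a * wmin <= a * wi) by (apply Rmult_le_compat_l; lra). lra. }
    assert (B3 : c * wi * JWi < a * wi / 4).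
    { assert (c * wi * JWi <= c * W * JWm).
      { apply Rmult_le_compat; try lra. apply Rmult_le_pos; lra. }
      assert (c * W * JWm <= a * wmin / (4 * (W + 1) * (JWm + 1)) * W * JWm).
      { apply Rmult_le_compat_r; [lra|]. apply Rmult_le_compat_r; lra. }
      assert (a * wmin / (4 * (W + 1) * (JWm + 1)) * W * JWm < a * wmin / 4).
      { apply Rmult_lt_reg_r with (4 * (W + 1) * (JWm + 1)); [nra|]. unfold Rdiv.
        replace (a * wmin * / (4 * (W + 1) * (JWm + 1)) * W * JWm * (4 * (W + 1) * (JWm + 1))) with (a * wmin * W * JWm) by (field; lra).
        assert (0 < a * wmin) by (apply Rmult_lt_0_compat; lra). nra. }
      assert (a * wmin <= a * wi) by (apply Rmult_le_compat_l; lra). lra. }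
    assert (Hexp : co * Lw = k * Lw - (ep + c * wi) * Lw) by (unfold co; ring).
    assert (Hfin : Tv * Fv - Rr t1 j * Gv - theta j * Rr t1 j >= c * (a * wi / 4)).
    { rewrite HRj at 2. unfold Lw in *. 
      assert (Hkey : k * JWi - (theta j + g j onev) * wi - k * (eta * W) - ep * JWi - c * wi * JWi >= a * wi / 4) by lra.
      assert (c * (k * JWi - (theta j + g j onev) * wi - k * (eta * W) - ep * JWi - c * wi * JWi) >= c * (a * wi / 4))
        by (apply Rle_ge, Rmult_le_compat_l; lra).
      nra. }
    assert (0 < a * wi) by (apply Rmult_lt_0_compat; lra). assert (0 < c * (a * wi / 4)) by (apply Rmult_lt_0_compat; lra).
    lra.
Qed.

Definition lowb i := exists c T0, c > 0 /\ forall t, t >= T0 -> Rr t i >= c.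

Lemma edge a b : (a < N)%nat -> (b < N)%nat -> ER a b -> lowb b -> lowb a.
Proof.
  intros Ha Hb Eab [cb [T0 [Hcb HT0]]].
  destruct (kap_prop a Ha) as [[Hk0 Hk1] _].
  destruct (Ubound a (kap a / 2) Ha ltac:(lra)) as [T1 [HT1p HT1]].
  set (k := kap a) in *.
  destruct (Hpar a Ha) as [Hth Hde].
  set (ph := f a (upd zerov b cb)).
  assert (Hph : ph > 0).
  { unfold ph. rewrite <- (f0 a Ha). destruct (Hf a Ha) as [_ [_ [_ [Hinc _]]]].
    replace (f a zerov) with (f a (upd zerov b 0)).
    - apply Rlt_gt. apply Hinc; auto; lra.
    - f_equal. apply functional_extensionality; intro m; unfold upd, zerov; destruct (Nat.eqb m b); auto. }
  set (K := g a onev + theta a). assert (HK : K > 0) by (unfold K; pose proof (g1_nonneg a Ha); lra).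
  assert (Hfl : forall t, t >= T0 -> t >= 0 -> f a (Rr t) >= ph).
  { intros t Ht Ht0. apply Rle_ge, fmono; auto. intros m Hm. unfold upd, zerov.
    destruct (Nat.eqb_spec m b) as [->|]. { apply Rge_le, HT0; auto. } apply (inv t m ltac:(lra) Hm). }
  assert (Hder : forall t, t > 0 -> t >= T0 -> t >= T1 ->
     Tt t a * f a (Rr t) - Rr t a * g a (Tt t) - theta a * Rr t a >= (k / 2 - Rr t a) * ph - Rr t a * K).
  { intros t Ht HtT0 HtT1. pose proof (inv t a ltac:(lra) Ha) as [HR [HT HU]].
    specialize (HT1 t HtT1). fold k in HT1. specialize (Hfl t HtT0 ltac:(lra)).
    pose proof (gT_le a t Ha ltac:(lra)).
    assert (Rr t a * g a (Tt t) <= Rr t a * g a onev) by (apply Rmult_le_compat_l; lra).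
    destruct (Rle_dec (Rr t a) (k / 2)).
    - assert (Tt t a * f a (Rr t) >= (k / 2 - Rr t a) * ph).
      { apply Rle_ge. apply Rle_trans with (Tt t a * ph).
        - apply Rmult_le_compat_r; lra.
        - apply Rmult_le_compat_l; lra. }
      unfold K. nra.
    - assert (Tt t a * f a (Rr t) >= 0) by (apply Rle_ge, Rmult_le_pos; lra).
      assert ((k / 2 - Rr t a) * ph <= 0) by (apply Rmult_le_0_r_compat || nra).
      unfold K. nra. }
  set (rho := Rmin (k / 8) (k * ph / (8 * K))).
  assert (Hrho : rho > 0) by (apply Rmin_glb_lt; [lra|apply Rdiv_lt_0_compat; [apply Rmult_lt_0_compat|]; lra]).
  assert (Hrho1 : rho <= k / 8) by apply Rmin_l.
  assert (Hrho2 : rho * K <= k * ph / 8).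
  { assert (rho <= k * ph / (8 * K)) by apply Rmin_r.
    apply Rmult_le_compat_r with (r := K) in H; [|lra].
    replace (k * ph / (8 * K) * K) with (k * ph / 8) in H by (field; lra). lra. }
  set (t2 := Rmax (Rmax T0 T1) 1).
  assert (Ht2a : t2 >= T0) by (unfold t2; apply Rle_ge; eapply Rle_trans; [apply Rmax_l|apply Rmax_l]).
  assert (Ht2b : t2 >= T1) by (unfold t2; apply Rle_ge; eapply Rle_trans; [apply Rmax_r|apply Rmax_l]).
  assert (Ht2c : t2 >= 1) by (unfold t2; apply Rle_ge, Rmax_r).
  set (sg := k * ph / 16). assert (Hsg : sg > 0) by (unfold sg; apply Rdiv_lt_0_compat; [apply Rmult_lt_0_compat|]; lra).
  set (tau := t2 + rho / sg). assert (Htau : tau > t2) by (unfold tau; assert (rho / sg > 0) by (apply Rdiv_lt_0_compat; lra); lra).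
  set (psi := fun s => sg * t2 + (- sg) * s).
  assert (Hdpsi : forall s, derivable_pt_lim psi s (- sg)) by (intros; apply dlin).
  set (hh := fun (_ : nat) s => 0 + 1 * Rr s a + 0 * Tt s a + psi s).
  assert (Hd : forall s, s > 0 -> derivable_pt_lim (hh 0%nat) s
     (1 * (Tt s a * f a (Rr s) - Rr s a * g a (Tt s) - theta a * Rr s a)
      + 0 * (Rr s a * g a (Tt s) - Tt s a * f a (Rr s) + delta a * (1 - Rr s a - Tt s a)) + - sg)).
  { intros s Hs. apply dgen; auto. }
  assert (HA : hh 0%nat tau > 0).
  { apply (cross 1 (fun _ => True) hh t2 tau); auto; try lra.
    - intros. unfold hh, psi. pose proof (Rpos a t2 Ha ltac:(lra)). nra.
    - intros m Hm _ e He. destruct m; [|lia]. apply (rc_at (hh 0%nat) t2); [lra| |exact He].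
      apply (der_ctn _ _ _ (Hd t2 ltac:(lra))).
    - intros m Hm _ s Hs. destruct m; [|lia]. apply (der_ctn _ _ _ (Hd s ltac:(lra))).
    - intros t1 Ht1 Hbef Hnow m Hm _ Hz. destruct m; [|lia].
      assert (Hl := touch _ t2 t1 _ (Hd t1 ltac:(lra)) ltac:(lra) (fun s Hs => Hbef 0%nat Hm I s Hs) Hz).
      unfold hh, psi in Hz.
      assert (HR : Rr t1 a <= rho).
      { assert (sg * (t1 - t2) <= sg * (tau - t2)) by (apply Rmult_le_compat_l; lra).
        replace (sg * (tau - t2)) with rho in H by (unfold tau; field; lra). nra. }
      pose proof (Hder t1 ltac:(lra) ltac:(lra) ltac:(lra)).
      pose proof (inv t1 a ltac:(lra) Ha) as [HR0 _].
      assert (Rr t1 a * K <= rho * K) by (apply Rmult_le_compat_r; lra).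
      assert ((k / 2 - Rr t1 a) * ph >= (k / 2 - rho) * ph) by (apply Rle_ge, Rmult_le_compat_r; lra).
      unfold sg in Hl. nra. }
  unfold hh, psi in HA.
  assert (HAr : Rr tau a > rho).
  { assert (E : sg * t2 + - sg * tau = - rho) by (unfold tau; field; lra). lra. }
  exists (rho / 2), tau. split; [lra|]. intros t Ht.
  set (h2 := fun (_ : nat) s => (- (rho / 2)) + 1 * Rr s a + 0 * Tt s a + (fun _ => 0) s).
  assert (Hd2 : forall s, s > 0 -> derivable_pt_lim (h2 0%nat) s
     (1 * (Tt s a * f a (Rr s) - Rr s a * g a (Tt s) - theta a * Rr s a)
      + 0 * (Rr s a * g a (Tt s) - Tt s a * f a (Rr s) + delta a * (1 - Rr s a - Tt s a)) + 0)).
  { intros s Hs. apply dgen; auto. apply dconst. }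
  assert (HB : h2 0%nat t > 0).
  { apply (cross 1 (fun _ => True) h2 tau t); auto; try lra.
    - intros. unfold h2. lra.
    - intros m Hm _ e He. destruct m; [|lia]. apply (rc_at (h2 0%nat) tau); [lra| |exact He].
      apply (der_ctn _ _ _ (Hd2 tau ltac:(lra))).
    - intros m Hm _ s Hs. destruct m; [|lia]. apply (der_ctn _ _ _ (Hd2 s ltac:(lra))).
    - intros t1 Ht1 Hbef Hnow m Hm _ Hz. destruct m; [|lia].
      assert (Hl := touch _ tau t1 _ (Hd2 t1 ltac:(lra)) ltac:(lra) (fun s Hs => Hbef 0%nat Hm I s Hs) Hz).
      unfold h2 in Hz. assert (HR : Rr t1 a = rho / 2) by lra.
      pose proof (Hder t1 ltac:(lra) ltac:(lra) ltac:(lra)).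
      rewrite HR in H. nra. }
  unfold h2 in HB. lra.
Qed.

Lemma main_sec : spectral_abscissa_pos N (Q2 N J theta delta g) ->
  exists c, c > 0 /\ forall i, (i < N)%nat ->
    forall eps, eps > 0 -> exists t0, forall t, t >= t0 -> Rr t i >= c - eps.
Proof.
  intros Hspec. destruct (persist_S Hspec) as [w [c [Ts [Hc [[k0 [Hk0 Hwk0]] [Hw HS]]]]]].
  assert (Hlk0 : lowb k0).
  { exists (c * w k0), Ts. split; [apply Rmult_lt_0_compat; lra|]. intros t Ht. left. apply HS; auto. }
  assert (Hall : forall i, (i < N)%nat -> lowb i).
  { intros i Hi. pose proof (Hsc i k0 Hi Hk0) as Hp.
    assert (Gen : forall x y, clos_refl_trans nat (fun a b => (a < N)%nat /\ (b < N)%nat /\ ER a b) x y -> lowb y -> lowb x).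
    { intros x y Hxy. induction Hxy as [x y [Hx [Hy E]] | x | x y z _ IH1 _ IH2].
      - apply edge; auto.
      - auto.
      - intros Hz. apply IH1, IH2, Hz. }
    apply (Gen i k0 Hp Hlk0). }
  destruct (fin_delta N (fun _ => True) (fun i d => exists T0, forall t, t >= T0 -> Rr t i >= d)) as [cc [Hcc Hq]].
  { intros m d d' Hd [T0 HT] . exists T0. intros t Ht. specialize (HT t Ht). lra. }
  { intros i Hi _. destruct (Hall i Hi) as [ci [T0 [Hci HT]]]. exists ci. split; auto. exists T0; auto. }
  exists cc. split; auto. intros i Hi eps Heps. destruct (Hq i Hi I) as [T0 HT].
  exists T0. intros t Ht. specialize (HT t Ht). lra.
Qed.

End Dyn.

Theorem theorem4 (N : nat) (ER ET : nat -> nat -> Prop)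
  (theta delta : nat -> R) (f g : nat -> vec -> R) (J : nat -> nat -> R)
  (Rr Tt : R -> vec) :
  strongly_connected N ER -> strongly_connected N ET ->
  (forall i, (i < N)%nat -> theta i > 0 /\ delta i > 0) ->
  admissible N ER f -> admissible N ET g ->
  (forall i j, (i < N)%nat -> (j < N)%nat -> partial_at (f i) j zerov (J i j)) ->
  spectral_abscissa_pos N (Q2 N J theta delta g) ->
  is_solution N f g theta delta Rr Tt ->
  (forall i, (i < N)%nat ->
     0 <= Rr 0 i /\ 0 <= Tt 0 i /\ Rr 0 i + Tt 0 i <= 1) ->
  (forall i, (i < N)%nat -> Rr 0 i > 0) ->
  exists c, c > 0 /\
    forall i, (i < N)%nat ->
      forall eps, eps > 0 -> exists t0, forall t, t >= t0 -> Rr t i >= c - eps.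
Proof.
  intros H1 H2 H3 H4 H5 H6 H7 H8 H9 H10.
  exact (main_sec N ER ET theta delta f g J Rr Tt H1 H3 H4 H5 H6 H8 H9 H10 H7).
Qed.
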